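(* There are two positive $C^\infty$ functions $\psi_1,\psi_2$ on $\mathbb{R}$, solutions of $L_0(\psi)=0$, such that: (1) $\psi_1(-v)=\psi_2(v)>0$ for all $v\in\mathbb{R}$; (2) $\{\psi_1,\psi_2\}$ is a basis of solutions of $L_0(\psi)=0$, and the Wronskian satisfies $\psi_1\psi_2'-\psi_1'\psi_2=1$ on $\mathbb{R}$; (3) for some $v_0>0$ large enough and positive constants $c_1,c_2$, $$\psi_1(v)\lesssim |v|^{-\gamma}\ (v\geqslant v_0),\qquad \psi_1(v)\lesssim|v|^{1+\gamma}\ (v\leqslant -v_0),$$ $$\psi_1(v)\sim c_1|v|^{-\gamma}\text{ at }+\infty,\qquad \psi_1(v)\sim c_2|v|^{1+\gamma}\text{ at }-\infty,$$ and correspondingly $$\psi_2(v)\lesssim |v|^{\gamma+1}\ (v\geqslant v_0),\qquad \psi_2(v)\lesssim|v|^{-\gamma}\ (v\leqslant -v_0),$$ $$\psi_2(v)\sim c_2|v|^{1+\gamma}\text{ at }+\infty,\qquad \psi_2(v)\sim c_1|v|^{-\gamma}\text{ at }-\infty.$$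
   Context: Fix $\gamma>1/2$. Let $\tilde W(v)=\frac{\gamma(\gamma+1)}{1+v^2}$ and $L_0(\psi)=-\psi''+\tilde W\psi$ on $\mathbb{R}$. The symbol $A\lesssim B$ means $A\leqslant CB$ for a constant $C>0$ independent of $v$. *)

(* Defs.v *)
From Stdlib Require Import Reals.
From Coquelicot Require Import Coquelicot.
Open Scope R_scope.

Definition Wt (gamma v : R) : R := gamma * (gamma + 1) / (1 + v ^ 2).

Definition L0 (gamma : R) (psi : R -> R) (v : R) : R :=
  - Derive_n psi 2 v + Wt gamma v * psi v.

Definition smooth (f : R -> R) : Prop := forall (n : nat) (x : R), ex_derive_n f n x.

Definition is_solution (gamma : R) (phi : R -> R) : Prop :=
  (forall x, ex_derive phi x) /\ (forall x, ex_derive_n phi 2 x) /\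
  (forall x, L0 gamma phi x = 0).

Definition wronskian (f g : R -> R) (v : R) : R :=
  f v * Derive g v - Derive f v * g v.

Definition asymp_equiv (f g : R -> R) (l : Rbar) : Prop :=
  is_lim (fun v => f v / g v) l 1.

(* Main.v *)
Require Import Defs.
From Stdlib Require Import Reals Lra Lia Psatz.
From Coquelicot Require Import Coquelicot.
Open Scope R_scope.

Lemma cont_eps (f : R -> R) x :
  (forall eps, 0 < eps -> exists d, 0 < d /\ forall y, Rabs (y - x) < d -> Rabs (f y - f x) < eps) ->
  continuous f x.
Proof.
  intros H. apply continuity_pt_filterlim.
  intros eps Heps. destruct (H eps Heps) as [d [Hd H2]].
  exists d; split; [lra|]. intros y [_ Hy]. apply H2. exact Hy.
Qed.

Lemma cont_eps_inv (f : R -> R) x : continuous f x ->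
  forall eps, 0 < eps -> exists d, 0 < d /\ forall y, Rabs (y - x) < d -> Rabs (f y - f x) < eps.
Proof.
  intros H eps Heps. apply continuity_pt_filterlim in H.
  destruct (H eps Heps) as [d [Hd H2]]. exists d; split; [lra|].
  intros y Hy. destruct (Req_dec y x) as [->|Hne].
  - rewrite Rminus_diag, Rabs_R0; lra.
  - apply H2. split; [split; [exact I|congruence]| exact Hy].
Qed.

Definition pp (a x : R) : R := match Rlt_dec 0 x with left _ => Rpower x a | right _ => 0 end.

Lemma pp_pos a x : 0 < x -> pp a x = Rpower x a.
Proof. intros H. unfold pp. destruct (Rlt_dec 0 x); [reflexivity| lra]. Qed.

Lemma pp_nonpos a x : x <= 0 -> pp a x = 0.
Proof. intros H. unfold pp. destruct (Rlt_dec 0 x); [lra|reflexivity]. Qed.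

Lemma Rpower_pos x a : 0 < Rpower x a.
Proof. unfold Rpower. apply exp_pos. Qed.

Lemma pp_ge0 a x : 0 <= pp a x.
Proof. unfold pp. destruct (Rlt_dec 0 x). left; apply Rpower_pos. lra. Qed.

Lemma pp_gt0 a x : 0 < x -> 0 < pp a x.
Proof. intros H; rewrite pp_pos by exact H; apply Rpower_pos. Qed.

Lemma Rpower_small a eps : 0 < a -> 0 < eps -> exists d, 0 < d /\ forall x, 0 < x < d -> Rpower x a < eps.
Proof.
  intros Ha He. exists (exp (ln eps / a)). split; [apply exp_pos|].
  intros x [Hx1 Hx2]. unfold Rpower.
  rewrite <- (exp_ln eps He). apply exp_increasing.
  assert (ln x < ln eps / a).
  { rewrite <- (ln_exp (ln eps / a)). apply ln_increasing; auto. }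
  apply Rmult_lt_compat_l with (r := a) in H; [|exact Ha].
  replace (a * (ln eps / a)) with (ln eps) in H by (field; lra). lra.
Qed.

Lemma pp_cont a x : 0 < a -> continuous (pp a) x.
Proof.
  intros Ha.
  destruct (Rlt_le_dec 0 x) as [Hx|Hx].
  - apply continuous_ext_loc with (fun y => Rpower y a).
    + exists (mkposreal x Hx). intros y Hy. symmetry. apply pp_pos.
      unfold ball in Hy; simpl in Hy; unfold AbsRing_ball, abs, minus, plus, opp in Hy; simpl in Hy.
      apply Rabs_lt_between in Hy. lra.
    + apply continuity_pt_filterlim.
      apply derivable_continuous_pt. exists (a * Rpower x (a-1)). apply derivable_pt_lim_power; auto.
  - apply cont_eps. intros eps Heps.
    destruct (Rpower_small a eps Ha Heps) as [d [Hd H]].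
    exists d; split; auto. intros y Hy.
    rewrite (pp_nonpos a x Hx).
    destruct (Rlt_le_dec 0 y) as [Hy0|Hy0].
    + rewrite pp_pos by auto. rewrite Rminus_0_r, Rabs_pos_eq by (left; apply Rpower_pos).
      apply H. split; auto. apply Rabs_lt_between in Hy. lra.
    + rewrite pp_nonpos by auto. rewrite Rminus_0_r, Rabs_R0. lra.
Qed.

Lemma locally_pos x : 0 < x -> locally x (fun y => 0 < y).
Proof.
  intros Hx. exists (mkposreal x Hx). intros y Hy.
  unfold ball in Hy; simpl in Hy; unfold AbsRing_ball, abs, minus, plus, opp in Hy; simpl in Hy.
  apply Rabs_lt_between in Hy. lra.
Qed.

Lemma locally_neg x : x < 0 -> locally x (fun y => y < 0).
Proof.
  intros Hx. assert (0 < -x) by lra. exists (mkposreal (-x) H). intros y Hy.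
  unfold ball in Hy; simpl in Hy; unfold AbsRing_ball, abs, minus, plus, opp in Hy; simpl in Hy.
  apply Rabs_lt_between in Hy. lra.
Qed.

Lemma is_derive_cst (c x : R) : is_derive (fun _ => c) x 0.
Proof. apply is_derive_Reals. apply derivable_pt_lim_const. Qed.

Lemma Rpower_derive x a : 0 < x -> is_derive (fun y => Rpower y a) x (a * Rpower x (a - 1)).
Proof. intros Hx. apply is_derive_Reals. apply derivable_pt_lim_power; auto. Qed.

Lemma pp_derive a x : 1 < a -> is_derive (pp a) x (a * pp (a - 1) x).
Proof.
  intros Ha.
  destruct (Rtotal_order x 0) as [Hx|[Hx|Hx]].
  - rewrite pp_nonpos by lra. rewrite Rmult_0_r.
    apply is_derive_ext_loc with (fun _ => 0).
    + generalize (locally_neg x Hx). apply filter_imp. intros y Hy. rewrite pp_nonpos; lra.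
    + apply is_derive_cst.
  - subst x. rewrite pp_nonpos by lra. rewrite Rmult_0_r.
    apply is_derive_Reals. intros eps Heps.
    destruct (Rpower_small (a-1) eps) as [d [Hd H]]; [lra|lra|].
    exists (mkposreal d Hd). intros h Hh0 Hh. simpl in Hh.
    rewrite Rplus_0_l, (pp_nonpos a 0) by lra. rewrite Rminus_0_r, Rminus_0_r.
    destruct (Rlt_le_dec 0 h) as [Hp|Hn].
    + rewrite pp_pos by lra.
      replace (Rpower h a / h) with (Rpower h (a - 1)).
      * rewrite Rabs_pos_eq by (left; apply Rpower_pos). apply H. rewrite Rabs_pos_eq in Hh; lra.
      * replace a with ((a - 1) + 1) at 2 by ring. rewrite Rpower_plus, Rpower_1 by lra. field. lra.
    + rewrite pp_nonpos by lra. unfold Rdiv. rewrite Rmult_0_l, Rabs_R0. lra.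
  - rewrite pp_pos by lra.
    apply is_derive_ext_loc with (fun y => Rpower y a).
    + generalize (locally_pos x Hx). apply filter_imp. intros y Hy. rewrite pp_pos; lra.
    + apply Rpower_derive; lra.
Qed.

Lemma pp_le_id a x : 1 <= a -> 0 <= x <= 1 -> pp a x <= x.
Proof.
  intros Ha Hx. destruct (Rlt_le_dec 0 x) as [Hp|Hn].
  - rewrite pp_pos by lra. rewrite <- (Rpower_1 x) at 2 by lra.
    unfold Rpower.
    destruct (Req_dec x 1) as [->|Hne].
    + rewrite ln_1, !Rmult_0_r. lra.
    + destruct (Req_dec a 1) as [->|Ha1]; [lra|].
      left. apply exp_increasing. assert (ln x < 0). { rewrite <- ln_1. apply ln_increasing; lra. } nra.
  - rewrite pp_nonpos by lra. lra.
Qed.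

Definition Iinf (f : R -> R) : R := real (Lim_seq (fun n => RInt f 0 (INR n))).

Lemma RInt_diff f a b : 0 <= a <= b -> ex_RInt f 0 b -> RInt f 0 b - RInt f 0 a = RInt f a b.
Proof.
  intros Hab Hex.
  rewrite <- (RInt_Chasles f 0 a b).
  - change (plus (RInt f 0 a) (RInt f a b)) with (RInt f 0 a + RInt f a b). ring.
  - apply (ex_RInt_Chasles_1 f 0 a b); [lra|exact Hex].
  - apply (ex_RInt_Chasles_2 f 0 a b); [lra|exact Hex].
Qed.

Lemma nat_above (x : R) : exists n : nat, x <= INR n.
Proof. destruct (INR_unbounded x) as [n Hn]. exists n. lra. Qed.

Lemma tail_lim (f : R -> R) (T : R -> R) :
  (forall b, 0 <= b -> ex_RInt f 0 b) ->
  (forall a b, 0 <= a <= b -> Rabs (RInt f a b) <= T a) ->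
  (forall eps, 0 < eps -> exists A, forall a, A <= a -> T a < eps) ->
  is_lim_seq (fun n => RInt f 0 (INR n)) (Iinf f) /\
  forall x, 0 <= x -> Rabs (RInt f 0 x - Iinf f) <= T x.
Proof.
  intros Hex Hb HT.
  set (u := fun n => RInt f 0 (INR n)).
  assert (Hc : Cauchy_crit u).
  { intros eps Heps. destruct (HT eps Heps) as [A HA].
    destruct (nat_above A) as [N HN]. exists N. intros n m Hn Hm.
    unfold Rdist, u.
    assert (Hn' : INR N <= INR n) by (apply le_INR; lia).
    assert (Hm' : INR N <= INR m) by (apply le_INR; lia).
    assert (0 <= INR N) by apply pos_INR.
    destruct (Rle_dec (INR m) (INR n)).
    - rewrite RInt_diff by (try apply Hex; lra).
      eapply Rle_lt_trans. apply Hb. lra. apply HA. lra.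
    - rewrite Rabs_minus_sym, RInt_diff by (try apply Hex; lra).
      eapply Rle_lt_trans. apply Hb. lra. apply HA. lra. }
  destruct (Rcomplete.R_complete u Hc) as [l Hl].
  assert (Hl' : is_lim_seq u l) by (apply is_lim_seq_Reals; exact Hl).
  assert (HI : Iinf f = l).
  { unfold Iinf. fold u. rewrite (is_lim_seq_unique _ _ Hl'). reflexivity. }
  rewrite HI. split; [exact Hl'|].
  intros x Hx.
  destruct (Rle_dec (Rabs (RInt f 0 x - l)) (T x)) as [Hok|Hko]; [exact Hok|exfalso].
  set (e := Rabs (RInt f 0 x - l) - T x).
  assert (He : e > 0) by (unfold e; lra).
  destruct (Hl e He) as [N HN].
  destruct (nat_above x) as [M HM].
  set (n := max N M).
  assert (Hn1 : (n >= N)%nat) by lia.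
  assert (Hn2 : x <= INR n) by (eapply Rle_trans; [exact HM| apply le_INR; lia]).
  specialize (HN n Hn1). unfold Rdist, u in HN.
  assert (H1 : Rabs (RInt f x (INR n)) <= T x) by (apply Hb; lra).
  rewrite <- RInt_diff in H1 by (try apply Hex; lra).
  assert (Rabs (RInt f 0 x - l) <= Rabs (RInt f 0 (INR n) - RInt f 0 x) + Rabs (RInt f 0 (INR n) - l)).
  { replace (RInt f 0 x - l) with (- (RInt f 0 (INR n) - RInt f 0 x) + (RInt f 0 (INR n) - l)) by ring.
    eapply Rle_trans. apply Rabs_triang. rewrite Rabs_Ropp. lra. }
  unfold e in HN. lra.
Qed.

Lemma D_eq (f : R -> R) (x l l' : R) : is_derive f x l -> l = l' -> is_derive f x l'.
Proof. intros H ->; exact H. Qed.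

Lemma D_mult (f g : R -> R) (x df dg : R) : is_derive f x df -> is_derive g x dg ->
  is_derive (fun y => f y * g y) x (df * g x + f x * dg).
Proof. intros Hf Hg. apply (is_derive_mult f g x df dg Hf Hg). intros; apply Rmult_comm. Qed.

Lemma D_plus (f g : R -> R) (x df dg : R) : is_derive f x df -> is_derive g x dg ->
  is_derive (fun y => f y + g y) x (df + dg).
Proof. intros Hf Hg. apply (is_derive_plus f g x df dg Hf Hg). Qed.

Lemma D_comp (f g : R -> R) (x df dg : R) : is_derive f (g x) df -> is_derive g x dg ->
  is_derive (fun y => f (g y)) x (dg * df).
Proof. intros Hf Hg. apply (is_derive_comp f g x df dg Hf Hg). Qed.

Lemma D_id x : is_derive (fun y => y) x 1.
Proof. apply is_derive_Reals. apply derivable_pt_lim_id. Qed.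

Lemma D_scal (k : R) (f : R -> R) (x df : R) : is_derive f x df -> is_derive (fun y => k * f y) x (k * df).
Proof. apply is_derive_scal. Qed.

Lemma C_mult (f g : R -> R) (x : R) : continuous f x -> continuous g x -> continuous (fun y => f y * g y) x.
Proof. apply (continuous_mult (K:=R_AbsRing)). Qed.
Lemma C_plus (f g : R -> R) (x : R) : continuous f x -> continuous g x -> continuous (fun y => f y + g y) x.
Proof. apply (continuous_plus (V:=R_NormedModule)). Qed.
Lemma C_opp (f : R -> R) (x : R) : continuous f x -> continuous (fun y => - f y) x.
Proof. apply (continuous_opp (V:=R_NormedModule)). Qed.
Lemma C_cst (c x : R) : continuous (fun _ => c) x.
Proof. apply continuous_const. Qed.
Lemma C_id (x : R) : continuous (fun y => y) x.
Proof. apply continuous_id. Qed.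
Lemma C_D (f : R -> R) (x l : R) : is_derive f x l -> continuous f x.
Proof. intros H. apply (ex_derive_continuous (K:=R_AbsRing) (V:=R_NormedModule)). exists l. exact H. Qed.

Definition Qa (a z : R) := Rpower (1 + z*z) (-a).

Lemma one_z2_pos z : 0 < 1 + z*z.
Proof. nra. Qed.

Lemma Qa_pos a z : 0 < Qa a z.
Proof. apply Rpower_pos. Qed.

Lemma Qa_succ a z : Qa (a+1) z = Qa a z / (1 + z*z).
Proof.
  unfold Qa. replace (-(a+1)) with (-a + -1) by ring.
  rewrite Rpower_plus, (Rpower_Ropp _ 1), Rpower_1 by apply one_z2_pos. field. generalize (one_z2_pos z); lra.
Qed.

Lemma Qa_derive a z : is_derive (Qa a) z (-2*a*z*Qa (a+1) z).
Proof.
  unfold Qa.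
  eapply D_eq.
  - apply (D_comp (fun u => Rpower u (-a)) (fun y => 1 + y*y)).
    + apply Rpower_derive, one_z2_pos.
    + apply D_plus. apply is_derive_cst. apply D_mult; apply D_id.
  - replace (-a - 1) with (-(a+1)) by ring. ring.
Qed.

Lemma Qa_cont a z : continuous (Qa a) z.
Proof. eapply C_D, Qa_derive. Qed.

Section Qs.
Variable m : R.

Definition Q0 z := Qa m z.
Definition Q1 z := -2*m*z*Qa (m+1) z.
Definition Q2 z := -2*m*Qa (m+1) z + 4*m*(m+1)*(z*z)*Qa (m+2) z.
Definition Q3 z := 12*m*(m+1)*z*Qa (m+2) z - 8*m*(m+1)*(m+2)*(z*z*z)*Qa (m+3) z.

Lemma Q0_derive z : is_derive Q0 z (Q1 z).
Proof. apply Qa_derive. Qed.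

Lemma Q1_derive z : is_derive Q1 z (Q2 z).
Proof.
  unfold Q1, Q2. eapply D_eq.
  - apply D_mult. apply D_scal, D_id. apply Qa_derive.
  - replace (m+1+1) with (m+2) by ring. ring.
Qed.

Lemma Q2_derive z : is_derive Q2 z (Q3 z).
Proof.
  unfold Q2, Q3. eapply D_eq.
  - apply D_plus.
    + apply D_scal, Qa_derive.
    + apply D_mult. apply D_scal. apply D_mult; apply D_id. apply Qa_derive.
  - replace (m+1+1) with (m+2) by ring. replace (m+2+1) with (m+3) by ring. ring.
Qed.

Lemma Q3_cont z : continuous Q3 z.
Proof.
  unfold Q3, Rminus.
  apply C_plus.
  - apply C_mult. apply C_mult. apply C_cst. apply C_id. apply Qa_cont.
  - apply C_opp. apply C_mult. apply C_mult. apply C_cst.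
    apply C_mult. apply C_mult. apply C_id. apply C_id. apply C_id. apply Qa_cont.
Qed.

End Qs.

Lemma Rpower_neg_inv x a : Rpower x (-a) = / Rpower x a.
Proof. apply Rpower_Ropp. Qed.

Lemma Qa_inv a z : Qa a z = / Rpower (1 + z*z) a.
Proof. unfold Qa. apply Rpower_Ropp. Qed.

Section Bounds.
Variable m : R.
Hypothesis Hm : 1 < m.

Definition KQ := 2*m + 4*m*(m+1).

Lemma Qa2 z : Qa (m+2) z = Q0 m z / ((1 + z*z) * (1 + z*z)).
Proof.
  replace (m+2) with ((m+1)+1) by ring. rewrite !Qa_succ. unfold Q0. field.
  generalize (one_z2_pos z); lra.
Qed.

Lemma Q_bound0 z : Rabs (Q0 m z) <= KQ * Q0 m z.
Proof.
  unfold KQ. rewrite Rabs_pos_eq by (left; apply Qa_pos).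
  generalize (Qa_pos m z). unfold Q0. nra.
Qed.

Lemma Q_bound1 z : Rabs (Q1 m z) <= KQ * Q0 m z.
Proof.
  unfold Q1, KQ. rewrite Qa_succ. fold (Q0 m z).
  assert (H0 := Qa_pos m z). fold (Q0 m z) in H0. assert (H1 := one_z2_pos z).
  assert (Hz : Rabs z <= 1 + z*z).
  { destruct (Rabs_pos z). apply Rabs_le. split; nra. nra. }
  replace (-2 * m * z * (Q0 m z / (1 + z * z))) with ((-2*m*Q0 m z / (1+z*z)) * z) by (field; lra).
  rewrite Rabs_mult.
  rewrite Rabs_left1.
  2:{ unfold Rdiv. apply Rmult_le_0_r. nra. left; apply Rinv_0_lt_compat; lra. }
  replace (- (-2 * m * Q0 m z / (1 + z * z))) with (2*m*Q0 m z / (1+z*z)) by (field; lra).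
  apply Rle_trans with (2*m*Q0 m z / (1+z*z) * (1+z*z)).
  - apply Rmult_le_compat_l. unfold Rdiv. apply Rmult_le_pos. nra. left; apply Rinv_0_lt_compat; lra. exact Hz.
  - replace (2 * m * Q0 m z / (1 + z * z) * (1 + z * z)) with (2*m*Q0 m z) by (field; lra). nra.
Qed.

Lemma Q_bound2 z : Rabs (Q2 m z) <= KQ * Q0 m z.
Proof.
  unfold Q2, KQ. rewrite Qa_succ, Qa2. fold (Q0 m z).
  assert (H0 := Qa_pos m z). fold (Q0 m z) in H0. assert (H1 := one_z2_pos z).
  assert (B1 : Q0 m z / (1 + z*z) <= Q0 m z).
  { unfold Rdiv. rewrite <- (Rmult_1_r (Q0 m z)) at 2. apply Rmult_le_compat_l. lra.
    rewrite <- Rinv_1. apply Rinv_le_contravar; nra. }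
  assert (B0 : 0 <= Q0 m z / (1 + z*z)) by (left; apply Rdiv_lt_0_compat; lra).
  assert (B2 : z * z * (Q0 m z / ((1 + z * z) * (1 + z * z))) <= Q0 m z).
  { replace (z * z * (Q0 m z / ((1 + z * z) * (1 + z * z)))) with
      (Q0 m z * (z*z / ((1 + z * z) * (1 + z * z)))) by (field; lra).
    rewrite <- (Rmult_1_r (Q0 m z)) at 2. apply Rmult_le_compat_l. lra.
    apply Rmult_le_reg_r with ((1 + z * z) * (1 + z * z)). nra.
    unfold Rdiv. rewrite Rmult_assoc, Rinv_l by nra. nra. }
  assert (B3 : 0 <= z * z * (Q0 m z / ((1 + z * z) * (1 + z * z)))).
  { apply Rmult_le_pos. nra. left; apply Rdiv_lt_0_compat; nra. }
  set (a := Q0 m z / (1 + z*z)) in *.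
  set (b := z * z * (Q0 m z / ((1 + z * z) * (1 + z * z)))) in *.
  replace (-2 * m * a + 4 * m * (m + 1) * (z * z) * (Q0 m z / ((1 + z * z) * (1 + z * z))))
    with (-(2*m*a) + 4*m*(m+1)*b) by (unfold b; ring).
  eapply Rle_trans. apply Rabs_triang. rewrite Rabs_Ropp.
  rewrite !Rabs_pos_eq by nra. nra.
Qed.

Lemma peetre v r : Q0 m (v + r) <= Rpower (2*(1+v*v)) m * Q0 m r.
Proof.
  unfold Q0. rewrite !Qa_inv.
  assert (Ha := one_z2_pos (v+r)). assert (Hb := one_z2_pos r). assert (Hc := one_z2_pos v).
  assert (P1 := Rpower_pos (1 + (v+r)*(v+r)) m).
  assert (P2 := Rpower_pos (1 + r*r) m).
  assert (P3 := Rpower_pos (2*(1+v*v)) m).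
  assert (Hle : Rpower (1 + r*r) m <= Rpower (2*(1+v*v)) m * Rpower (1 + (v+r)*(v+r)) m).
  { rewrite Rpower_mult_distr by nra. apply Rle_Rpower_l. lra. split. lra.
    assert (0 <= (v + r + v) * (v + r + v)) by apply Rle_0_sqr.
    assert (0 <= (v*(v+r)) * (v*(v+r))) by apply Rle_0_sqr. nra. }
  apply Rmult_le_reg_r with (Rpower (1 + (v+r)*(v+r)) m * Rpower (1 + r*r) m). nra.
  replace (/ Rpower (1 + (v + r) * (v + r)) m * (Rpower (1 + (v + r) * (v + r)) m * Rpower (1 + r * r) m))
    with (Rpower (1 + r * r) m) by (field; lra).
  replace (Rpower (2 * (1 + v * v)) m * / Rpower (1 + r * r) m *
     (Rpower (1 + (v + r) * (v + r)) m * Rpower (1 + r * r) m)) with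
    (Rpower (2 * (1 + v * v)) m * Rpower (1 + (v + r) * (v + r)) m) by (field; lra).
  exact Hle.
Qed.

Lemma ppQ r : 0 <= r -> pp m r * Q0 m r <= Rpower 2 m * Rpower (1 + r) (-m).
Proof.
  intros Hr. destruct (Rlt_le_dec 0 r) as [Hp|Hn].
  - rewrite pp_pos by exact Hp. unfold Q0. rewrite Qa_inv, Rpower_neg_inv.
    assert (P1 := Rpower_pos r m). assert (P2 := Rpower_pos (1 + r*r) m).
    assert (P3 := Rpower_pos 2 m). assert (P4 := Rpower_pos (1 + r) m).
    assert (Hle : Rpower r m * Rpower (1+r) m <= Rpower 2 m * Rpower (1 + r*r) m).
    { rewrite !Rpower_mult_distr by nra. apply Rle_Rpower_l. lra. split. nra. nra. }
    apply Rmult_le_reg_r with (Rpower (1 + r*r) m * Rpower (1 + r) m). nra.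
    replace (Rpower r m * / Rpower (1 + r * r) m * (Rpower (1 + r * r) m * Rpower (1 + r) m))
      with (Rpower r m * Rpower (1 + r) m) by (field; lra).
    replace (Rpower 2 m * / Rpower (1 + r) m * (Rpower (1 + r * r) m * Rpower (1 + r) m))
      with (Rpower 2 m * Rpower (1 + r * r) m) by (field; lra).
    exact Hle.
  - rewrite pp_nonpos by lra. rewrite Rmult_0_l.
    apply Rmult_le_pos; left; apply Rpower_pos.
Qed.

End Bounds.

Definition Cont (f : R -> R) := forall x, continuous f x.

Lemma exRI (f : R -> R) a b : Cont f -> ex_RInt f a b.
Proof. intros H. apply (ex_RInt_continuous (V:=R_CompleteNormedModule)). intros; apply H. Qed.

Lemma RI_le (f g : R -> R) a b : a <= b -> Cont f -> Cont g ->
  (forall x, a < x < b -> f x <= g x) -> RInt f a b <= RInt g a b.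
Proof. intros. apply RInt_le; auto; apply exRI; auto. Qed.

Lemma Cont_abs f : Cont f -> Cont (fun x => Rabs (f x)).
Proof. intros H x. apply continuous_Rabs_comp. apply H. Qed.

Lemma RI_abs (f : R -> R) a b : a <= b -> Cont f -> Rabs (RInt f a b) <= RInt (fun x => Rabs (f x)) a b.
Proof. intros. apply abs_RInt_le; auto. apply exRI; auto. Qed.

Lemma RI_scal (f : R -> R) a b k : Cont f -> RInt (fun x => k * f x) a b = k * RInt f a b.
Proof. intros H. apply (RInt_scal (V:=R_CompleteNormedModule)). apply exRI; auto. Qed.

Lemma Cont_mult f g : Cont f -> Cont g -> Cont (fun x => f x * g x).
Proof. intros Hf Hg x. apply C_mult; auto. Qed.
Lemma Cont_cst c : Cont (fun _ => c).
Proof. intros x; apply C_cst. Qed.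

Lemma Cont_shift (q : R -> R) v : Cont q -> Cont (fun r => q (v + r)).
Proof.
  intros H r. apply (continuous_comp (fun r => v + r) q).
  - apply C_plus. apply C_cst. apply C_id.
  - apply H.
Qed.

Lemma Rpower_large_small b : b < 0 -> forall eps, 0 < eps -> exists A, 0 < A /\ forall x, A <= x -> Rpower x b < eps.
Proof.
  intros Hb eps He. exists (exp (ln eps / b) + 1). split.
  { generalize (exp_pos (ln eps / b)); lra. }
  intros x Hx. assert (Hx0 : 0 < x) by (generalize (exp_pos (ln eps / b)); lra).
  unfold Rpower. rewrite <- (exp_ln eps He). apply exp_increasing.
  assert (ln eps / b < ln x).
  { rewrite <- (ln_exp (ln eps / b)). apply ln_increasing. apply exp_pos. lra. }
  apply Rmult_lt_compat_r with (r := - b) in H; [|lra].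
  replace (ln eps / b * - b) with (- ln eps) in H by (field; lra). lra.
Qed.

Section Kernel.
Variable m : R.
Hypothesis Hm : 1 < m.

Definition kq (q : R -> R) (v r : R) := pp m r * q (v + r).

Lemma kq_cont q v : Cont q -> Cont (kq q v).
Proof. intros H. unfold kq. apply Cont_mult. intros x; apply pp_cont; lra. apply Cont_shift; auto. Qed.

Definition gm (r : R) := Rpower (1 + Rabs r) (-m).

Lemma gm_cont : Cont gm.
Proof.
  intros x. unfold gm.
  apply (continuous_comp (fun r => 1 + Rabs r) (fun u => Rpower u (-m))).
  apply C_plus. apply C_cst. apply continuous_Rabs.
  eapply C_D. apply Rpower_derive. generalize (Rabs_pos x); lra.
Qed.

Lemma gm_pos r : 0 < gm r.
Proof. apply Rpower_pos. Qed.

Lemma gm_int a b : 0 <= a <= b -> RInt gm a b = (Rpower (1+a) (1-m) - Rpower (1+b) (1-m)) / (m - 1).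
Proof.
  intros Hab.
  rewrite (RInt_ext gm (fun r => Rpower (1 + r) (-m))).
  2:{ intros x Hx. rewrite Rmin_left in Hx by lra. rewrite Rmax_right in Hx by lra.
      unfold gm. rewrite Rabs_pos_eq by lra. reflexivity. }
  apply is_RInt_unique.
  set (F := fun r => - Rpower (1 + r) (1 - m) / (m - 1)).
  replace ((Rpower (1 + a) (1 - m) - Rpower (1 + b) (1 - m)) / (m - 1)) with (minus (F b) (F a)).
  2:{ unfold F, minus, plus, opp; simpl. field. lra. }
  apply (is_RInt_derive (V:=R_CompleteNormedModule)).
  - intros x Hx. rewrite Rmin_left in Hx by lra. rewrite Rmax_right in Hx by lra.
    unfold F. eapply D_eq.
    + apply (is_derive_ext (fun r => (-1/(m-1)) * Rpower (1 + r) (1 - m))).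
      { intros t. simpl. field. lra. }
      apply D_scal. apply (D_comp (fun u => Rpower u (1-m)) (fun r => 1 + r)).
      apply Rpower_derive. lra. apply (D_plus (fun _ => 1) (fun r => r)). apply is_derive_cst. apply D_id.
    + replace (1 - m - 1) with (-m) by ring. field. lra.
  - intros x Hx. rewrite Rmin_left in Hx by lra. rewrite Rmax_right in Hx by lra.
    apply (continuous_comp (fun r => 1 + r) (fun u => Rpower u (-m))).
    apply C_plus. apply C_cst. apply C_id.
    eapply C_D. apply Rpower_derive. lra.
Qed.


Lemma dom_int (f : R -> R) C : Cont f -> (forall r, 0 <= r -> Rabs (f r) <= C * gm r) ->
  forall a b, 0 <= a <= b -> Rabs (RInt f a b) <= C * Rpower (1+a) (1-m) / (m-1).
Proof.
  intros Hc Hb a b Hab.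
  assert (HC : 0 <= C).
  { specialize (Hb 0 (Rle_refl 0)). generalize (Rabs_pos (f 0)) (gm_pos 0). intros. nra. }
  eapply Rle_trans. apply RI_abs. lra. exact Hc.
  eapply Rle_trans. apply (RI_le _ (fun r => C * gm r)). lra. apply Cont_abs; auto.
  apply Cont_mult. apply Cont_cst. apply gm_cont.
  intros x Hx. apply Hb. lra.
  rewrite RI_scal by apply gm_cont. rewrite gm_int by lra.
  assert (0 < Rpower (1 + b) (1 - m)) by apply Rpower_pos.
  unfold Rdiv. rewrite <- Rmult_assoc. apply Rmult_le_compat_r. left; apply Rinv_0_lt_compat; lra.
  apply Rmult_le_compat_l; lra.
Qed.

Lemma Ttail C : 0 <= C -> forall eps, 0 < eps -> exists A, forall a, A <= a -> C * Rpower (1+a) (1-m) / (m-1) < eps.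
Proof.
  intros HC eps He.
  destruct (Rpower_large_small (1-m)) with (eps := eps * (m-1) / (C+1)) as [A [HA HA2]].
  lra. apply Rdiv_lt_0_compat. nra. lra.
  exists A. intros a Ha.
  assert (H1 : Rpower (1 + a) (1 - m) < eps * (m - 1) / (C + 1)) by (apply HA2; lra).
  assert (H2 := Rpower_pos (1+a) (1-m)).
  apply Rle_lt_trans with ((C+1) * Rpower (1 + a) (1 - m) / (m - 1)).
  - unfold Rdiv. apply Rmult_le_compat_r. left; apply Rinv_0_lt_compat; lra. nra.
  - apply Rmult_lt_reg_r with ((m-1)/(C+1)). apply Rdiv_lt_0_compat; lra.
    replace ((C + 1) * Rpower (1 + a) (1 - m) / (m - 1) * ((m - 1) / (C + 1))) with (Rpower (1 + a) (1 - m)) by (field; lra).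
    replace (eps * ((m - 1) / (C + 1))) with (eps * (m - 1) / (C + 1)) by (field; lra). exact H1.
Qed.

Lemma Iinf_approx (f : R -> R) C : Cont f -> (forall r, 0 <= r -> Rabs (f r) <= C * gm r) ->
  is_lim_seq (fun n => RInt f 0 (INR n)) (Iinf f) /\
  forall x, 0 <= x -> Rabs (RInt f 0 x - Iinf f) <= C * Rpower (1+x) (1-m) / (m-1).
Proof.
  intros Hc Hb.
  assert (HC : 0 <= C).
  { specialize (Hb 0 (Rle_refl 0)). generalize (Rabs_pos (f 0)) (gm_pos 0). intros. nra. }
  apply tail_lim.
  - intros; apply exRI; auto.
  - intros a b Hab. apply (dom_int f C Hc Hb a b Hab).
  - apply Ttail; auto.
Qed.

Definition Cv (v : R) := KQ m * Rpower (2*(1+v*v)) m * Rpower 2 m.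

Lemma Cv_pos v : 0 < Cv v.
Proof.
  unfold Cv, KQ. apply Rmult_lt_0_compat. apply Rmult_lt_0_compat. nra. apply Rpower_pos. apply Rpower_pos.
Qed.

Lemma Cv_mono v M : Rabs v <= M -> Cv v <= Cv M.
Proof.
  intros H. unfold Cv. apply Rmult_le_compat_r. left; apply Rpower_pos.
  apply Rmult_le_compat_l. unfold KQ; nra.
  apply Rle_Rpower_l. lra. split. nra.
  assert (v * v <= M * M).
  { assert (E : v*v = Rabs v * Rabs v) by (rewrite <- Rabs_mult; symmetry; apply Rabs_pos_eq; apply Rle_0_sqr).
    rewrite E. generalize (Rabs_pos v); nra. }
  nra.
Qed.

Lemma kq_bound q v : (forall z, Rabs (q z) <= KQ m * Q0 m z) ->
  forall r, 0 <= r -> Rabs (kq q v r) <= Cv v * gm r.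
Proof.
  intros Hq r Hr. unfold kq, Cv, gm. rewrite Rabs_pos_eq with (x := r) by lra.
  rewrite Rabs_mult, (Rabs_pos_eq (pp m r)) by apply pp_ge0.
  assert (H1 := pp_ge0 m r).
  assert (H2 := Hq (v + r)).
  assert (H3 := peetre m Hm v r).
  assert (H4 := ppQ m Hm r Hr).
  assert (HK : 0 < KQ m) by (unfold KQ; nra).
  assert (P1 := Rpower_pos (2 * (1 + v * v)) m).
  apply Rle_trans with (pp m r * (KQ m * Q0 m (v + r))).
  { apply Rmult_le_compat_l; auto. }
  apply Rle_trans with (pp m r * (KQ m * (Rpower (2 * (1 + v * v)) m * Q0 m r))).
  { apply Rmult_le_compat_l; auto. apply Rmult_le_compat_l; lra. }
  replace (pp m r * (KQ m * (Rpower (2 * (1 + v * v)) m * Q0 m r))) with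
    (KQ m * Rpower (2 * (1 + v * v)) m * (pp m r * Q0 m r)) by ring.
  rewrite Rmult_assoc with (r3 := Rpower (1 + r) (- m)).
  apply Rmult_le_compat_l. nra. exact H4.
Qed.

End Kernel.

Lemma cont2d_prod (f g : R -> R) x t : continuous f t -> continuous g (x + t) ->
  continuity_2d_pt (fun u w => f w * g (u + w)) x t.
Proof.
  intros Hf Hg eps.
  set (A := Rabs (f t) + 1). set (B := Rabs (g (x + t)) + 1).
  assert (HA : 0 < A) by (unfold A; generalize (Rabs_pos (f t)); lra).
  assert (HB : 0 < B) by (unfold B; generalize (Rabs_pos (g (x+t))); lra).
  assert (He := cond_pos eps).
  destruct (cont_eps_inv f t Hf (Rmin 1 (eps / (2*B)))) as [df [Hdf Hf2]].
  { apply Rmin_pos. lra. apply Rdiv_lt_0_compat; lra. }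
  destruct (cont_eps_inv g (x+t) Hg (eps / (2*A))) as [dg [Hdg Hg2]].
  { apply Rdiv_lt_0_compat; lra. }
  assert (Hd : 0 < Rmin df (dg/2)) by (apply Rmin_pos; lra).
  exists (mkposreal _ Hd). intros u w Hu Hw. simpl in Hu, Hw.
  assert (Hw1 : Rabs (w - t) < df) by (eapply Rlt_le_trans; [exact Hw| apply Rmin_l]).
  assert (Hw2 : Rabs (w - t) < dg/2) by (eapply Rlt_le_trans; [exact Hw| apply Rmin_r]).
  assert (Hu2 : Rabs (u - x) < dg/2) by (eapply Rlt_le_trans; [exact Hu| apply Rmin_r]).
  specialize (Hf2 w Hw1).
  assert (Hg3 : Rabs (g (u + w) - g (x + t)) < eps / (2*A)).
  { apply Hg2. replace (u + w - (x + t)) with ((u - x) + (w - t)) by ring.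
    eapply Rle_lt_trans. apply Rabs_triang. lra. }
  assert (Hf3 : Rabs (f w - f t) < 1) by (eapply Rlt_le_trans; [exact Hf2| apply Rmin_l]).
  assert (Hf4 : Rabs (f w - f t) < eps / (2*B)) by (eapply Rlt_le_trans; [exact Hf2| apply Rmin_r]).
  assert (Hfw : Rabs (f w) <= A).
  { unfold A. replace (f w) with ((f w - f t) + f t) by ring. eapply Rle_trans. apply Rabs_triang. lra. }
  replace (f w * g (u + w) - f t * g (x + t)) with (f w * (g (u + w) - g (x + t)) + (f w - f t) * g (x+t)) by ring.
  eapply Rle_lt_trans. apply Rabs_triang. rewrite !Rabs_mult.
  assert (Rabs (f w) * Rabs (g (u + w) - g (x + t)) < A * (eps / (2*A))).
  { apply Rle_lt_trans with (A * Rabs (g (u + w) - g (x + t))).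
    apply Rmult_le_compat_r. apply Rabs_pos. lra.
    apply Rmult_lt_compat_l; lra. }
  assert (Rabs (f w - f t) * Rabs (g (x + t)) <= (eps / (2*B)) * B).
  { apply Rmult_le_compat; try apply Rabs_pos; try lra. unfold B; lra. }
  replace (A * (eps / (2 * A))) with (eps/2) in H by (field; lra).
  replace (eps / (2 * B) * B) with (eps/2) in H0 by (field; lra).
  lra.
Qed.

Lemma cont2d_ext (f g : R -> R -> R) x y : (forall u v, f u v = g u v) -> continuity_2d_pt g x y -> continuity_2d_pt f x y.
Proof.
  intros E H eps. destruct (H eps) as [d Hd]. exists d. intros u v Hu Hv. rewrite !E. apply Hd; auto.
Qed.

Section Param.
Variable m : R.
Hypothesis Hm : 1 < m.

Lemma kq_derive_u q q' t x : (forall z, is_derive q z (q' z)) ->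
  is_derive (fun u => kq m q u t) x (kq m q' x t).
Proof.
  intros Hq. unfold kq. apply D_scal. eapply D_eq.
  apply (D_comp q (fun u => u + t)). apply Hq. apply (D_plus (fun u => u) (fun _ => t)). apply D_id. apply is_derive_cst.
  ring.
Qed.

Lemma param_derive_fin q q' b v : (forall z, is_derive q z (q' z)) -> Cont q -> Cont q' ->
  is_derive (fun v => RInt (kq m q v) 0 b) v (RInt (kq m q' v) 0 b).
Proof.
  intros Hd Hc Hc'.
  assert (E : RInt (kq m q' v) 0 b = RInt (fun t => Derive (fun u => kq m q u t) v) 0 b).
  { apply RInt_ext. intros x _. symmetry. apply is_derive_unique. apply kq_derive_u; auto. }
  rewrite E.
  apply (is_derive_RInt_param (fun u t => kq m q u t) 0 b v).
  - apply filter_forall. intros x0 t _. eexists. apply kq_derive_u; eauto.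
  - intros t _. apply cont2d_ext with (fun u w => pp m w * q' (u + w)).
    + intros u w. apply is_derive_unique. apply kq_derive_u; auto.
    + apply cont2d_prod. apply pp_cont; lra. apply Hc'.
  - apply filter_forall. intros y. apply exRI. apply kq_cont; auto.
Qed.

End Param.

Section CVU.
Variable m : R.
Hypothesis Hm : 1 < m.

Lemma unif_conv q : (forall z, Rabs (q z) <= KQ m * Q0 m z) -> Cont q ->
  forall x eps, 0 < eps -> exists N : nat, forall n : nat, (N <= n)%nat -> forall y, x - 1 < y < x + 1 ->
  Rabs (RInt (kq m q y) 0 (INR n) - Iinf (kq m q y)) < eps.
Proof.
  intros Hb Hc x eps He.
  set (M := Rabs x + 1).
  destruct (Ttail m Hm (Cv m M) (Rlt_le _ _ (Cv_pos m Hm M)) eps He) as [A HA].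
  destruct (nat_above A) as [N HN]. exists N. intros n Hn y Hy.
  assert (HyM : Rabs y <= M).
  { unfold M. apply Rabs_le. destruct (Rabs_le_between' x x) as [_ _] || idtac.
    generalize (Rabs_pos x) (Rle_abs x) (Rle_abs (-x)). rewrite Rabs_Ropp. intros. split; lra. }
  assert (HnA : A <= INR n) by (eapply Rle_trans; [exact HN| apply le_INR; lia]).
  assert (Hn0 : 0 <= INR n) by apply pos_INR.
  destruct (Iinf_approx m Hm (kq m q y) (Cv m y) (kq_cont m Hm q y Hc) (kq_bound m Hm q y Hb)) as [_ H2].
  eapply Rle_lt_trans. apply H2. exact Hn0.
  eapply Rle_lt_trans. 2: apply (HA (INR n) HnA).
  unfold Rdiv. apply Rmult_le_compat_r. left; apply Rinv_0_lt_compat; lra.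
  apply Rmult_le_compat_r. left; apply Rpower_pos.
  apply Cv_mono; auto.
Qed.

Lemma Iinf_lim q : (forall z, Rabs (q z) <= KQ m * Q0 m z) -> Cont q -> forall y,
  is_lim_seq (fun n => RInt (kq m q y) 0 (INR n)) (Iinf (kq m q y)).
Proof.
  intros Hb Hc y. apply (Iinf_approx m Hm (kq m q y) (Cv m y) (kq_cont m Hm q y Hc) (kq_bound m Hm q y Hb)).
Qed.

Lemma Iinf_derive q q' q'' :
  (forall z, is_derive q z (q' z)) -> (forall z, is_derive q' z (q'' z)) -> Cont q'' ->
  (forall z, Rabs (q z) <= KQ m * Q0 m z) -> (forall z, Rabs (q' z) <= KQ m * Q0 m z) ->
  forall x, is_derive (fun v => Iinf (kq m q v)) x (Iinf (kq m q' x)).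
Proof.
  intros D1 D2 C2 B1 B2 x.
  assert (C1 : Cont q') by (intros z; eapply C_D; apply D2).
  assert (C0 : Cont q) by (intros z; eapply C_D; apply D1).
  set (fn := fun (n : nat) (v : R) => RInt (kq m q v) 0 (INR n)).
  set (D := fun v => x - 1 < v /\ v < x + 1).
  assert (Hder : forall n y, Derive (fn n) y = RInt (kq m q' y) 0 (INR n)).
  { intros n y. apply is_derive_unique. apply param_derive_fin; auto. }
  assert (HL : forall y, Lim_seq (fun n => fn n y) = Finite (Iinf (kq m q y))).
  { intros y. apply is_lim_seq_unique. apply Iinf_lim; auto. }
  assert (HL' : forall y, Lim_seq (fun n => Derive (fn n) y) = Finite (Iinf (kq m q' y))).
  { intros y. apply is_lim_seq_unique. eapply is_lim_seq_ext.
    intros n. symmetry. apply Hder. apply Iinf_lim; auto. }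
  assert (HC := CVU_Derive fn D).
  assert (Hx : D x) by (unfold D; lra).
  specialize (HC (open_and _ _ (open_gt _) (open_lt _))).
  assert (Hcon : is_connected D) by (intros a b y Ha Hb Hy; unfold D in *; lra).
  specialize (HC Hcon).
  assert (Hcvu : CVU_dom fn D).
  { intros eps. destruct (unif_conv q B1 C0 x eps (cond_pos eps)) as [N HN].
    exists N. intros n Hn y Hy. rewrite HL. simpl. apply HN; auto. }
  specialize (HC Hcvu).
  assert (Hex : forall n y, D y -> ex_derive (fn n) y).
  { intros n y _. eexists. apply param_derive_fin; auto. }
  specialize (HC Hex).
  assert (Hct : forall n y, D y -> continuity_pt (Derive (fn n)) y).
  { intros n y _. apply continuity_pt_ext with (fun y => RInt (kq m q' y) 0 (INR n)).
    intros; symmetry; apply Hder.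
    apply continuity_pt_filterlim. apply (C_D (fun v => RInt (kq m q' v) 0 (INR n)) y (RInt (kq m q'' y) 0 (INR n))). apply param_derive_fin; auto. }
  specialize (HC Hct).
  assert (Hcvu' : CVU_dom (fun n y => Derive (fn n) y) D).
  { intros eps. destruct (unif_conv q' B2 C1 x eps (cond_pos eps)) as [N HN].
    exists N. intros n Hn y Hy. rewrite HL'. simpl. rewrite Hder. apply HN; auto. }
  specialize (HC Hcvu' x Hx).
  eapply D_eq.
  - eapply is_derive_ext. 2: exact HC. intros t. simpl. unfold Iinf. reflexivity.
  - rewrite HL'. reflexivity.
Qed.

End CVU.

Lemma pp_succ a r : pp (a+1) r = r * pp a r.
Proof.
  destruct (Rlt_le_dec 0 r) as [H|H].
  - rewrite !pp_pos by exact H. rewrite Rpower_plus, Rpower_1 by exact H. ring.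
  - rewrite !pp_nonpos by exact H. ring.
Qed.

Lemma br_bound m v r : 1 < m -> 0 <= r ->
  Rabs (-2*m*(r*r)*(v+r)/(1+(v+r)*(v+r)) + 4*m*r*((v+r)*(v+r))/(1+(v+r)*(v+r)) - m*r)
  <= (4*m*(1+v*v)*(1+Rabs v) + 5*m)*(1+r).
Proof.
  intros Hm Hr. set (z := v + r).
  assert (Hz : 0 < 1 + z*z) by (generalize (Rle_0_sqr z); unfold Rsqr; lra).
  assert (Ha : Rabs z <= Rabs v + r) by (unfold z; eapply Rle_trans; [apply Rabs_triang| rewrite (Rabs_pos_eq r) by lra; lra]).
  assert (Hv0 := Rabs_pos v).
  assert (Hzz : z*z = Rabs z * Rabs z) by (rewrite <- Rabs_mult; symmetry; apply Rabs_pos_eq; apply Rle_0_sqr).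
  assert (Hvv : v*v = Rabs v * Rabs v) by (rewrite <- Rabs_mult; symmetry; apply Rabs_pos_eq; apply Rle_0_sqr).
  assert (Hr2 : r*r <= 2*(1+v*v)*(1+z*z)).
  { replace r with (z - v) by (unfold z; ring).
    assert (0 <= (z+v)*(z+v)) by apply Rle_0_sqr. assert (0 <= (v*z)*(v*z)) by apply Rle_0_sqr. nra. }
  assert (T1 : Rabs (-2*m*(r*r)*z/(1+z*z)) <= 4*m*(1+v*v)*(1+Rabs v)*(1+r)).
  { assert (Hq : r*r / (1+z*z) <= 2*(1+v*v)).
    { apply Rmult_le_reg_r with (1+z*z). lra. unfold Rdiv. rewrite Rmult_assoc, Rinv_l by lra. lra. }
    assert (Hq0 : 0 <= r * r / (1 + z*z)) by (apply Rmult_le_pos; [apply Rle_0_sqr| left; apply Rinv_0_lt_compat; lra]).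
    replace (-2*m*(r*r)*z/(1+z*z)) with (-((2*m*(r*r/(1+z*z))) * z)) by (field; lra).
    rewrite Rabs_Ropp, Rabs_mult, (Rabs_pos_eq (2*m*(r*r/(1+z*z)))) by nra.
    assert (Rabs z <= (1 + Rabs v)*(1+r)) by nra.
    assert (0 <= 1 + v*v) by nra.
    apply Rle_trans with (2*m*(2*(1+v*v)) * Rabs z). apply Rmult_le_compat_r. apply Rabs_pos. nra.
    apply Rle_trans with (2*m*(2*(1+v*v)) * ((1 + Rabs v)*(1+r))). apply Rmult_le_compat_l. nra. lra.
    nra. }
  assert (T2 : Rabs (4*m*r*(z*z)/(1+z*z)) <= 4*m*r).
  { rewrite Rabs_pos_eq.
    2:{ apply Rmult_le_pos. apply Rmult_le_pos. nra. apply Rle_0_sqr. left; apply Rinv_0_lt_compat; lra. }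
    apply Rmult_le_reg_r with (1+z*z). lra. unfold Rdiv. rewrite Rmult_assoc, Rinv_l by lra.
    assert (0 <= z*z) by apply Rle_0_sqr. nra. }
  assert (T3 : Rabs (m*r) <= m*r) by (rewrite Rabs_pos_eq by nra; lra).
  eapply Rle_trans. unfold Rminus. apply Rabs_triang. rewrite Rabs_Ropp.
  eapply Rle_trans. apply Rplus_le_compat_r. apply Rabs_triang.
  assert (0 <= v*v) by apply Rle_0_sqr. assert (0 <= 4*m*(1+v*v)) by nra.
  assert (0 <= 4*m*(1+v*v)*(1+Rabs v)) by (apply Rmult_le_pos; lra). nra.
Qed.

Section ODE.
Variable m : R.
Hypothesis Hm : 1 < m.

Lemma Q2_rel z : (1+z*z) * Q2 m z = -2*m*Q0 m z - 2*(m+1)*z*Q1 m z.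
Proof.
  unfold Q2, Q1. rewrite (Qa2 m z), Qa_succ. unfold Q0. field. generalize (one_z2_pos z); lra.
Qed.

Lemma shift_derive (q q' : R -> R) (v r : R) : (forall z, is_derive q z (q' z)) -> is_derive (fun r => q (v + r)) r (q' (v + r)).
Proof.
  intros H. eapply D_eq. apply (D_comp q (fun r => v + r)). apply H.
  apply (D_plus (fun _ => v) (fun r => r)). apply is_derive_cst. apply D_id. ring.
Qed.

Definition Bt v r := pp (m+2) r * Q1 m (v+r) - 2*(v+r)*pp (m+1) r * Q1 m (v+r) - m * pp (m+1) r * Q0 m (v+r).
Definition target v r := (1+v*v) * kq m (Q2 m) v r - m*(m-1) * kq m (Q0 m) v r.

Lemma Bt_derive v r : is_derive (Bt v) r (target v r).
Proof.
  unfold Bt, Rminus.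
  eapply D_eq.
  - apply D_plus. apply D_plus.
    + apply D_mult. apply pp_derive; lra. apply shift_derive. apply Q1_derive.
    + apply (is_derive_ext (fun r => (-2) * ((v + r) * pp (m+1) r * Q1 m (v + r)))). { intros t; simpl; ring. }
      apply D_scal. apply D_mult. apply D_mult.
      apply (D_plus (fun _ => v) (fun r => r)). apply is_derive_cst. apply D_id.
      apply pp_derive; lra. apply shift_derive. apply Q1_derive.
    + apply (is_derive_ext (fun r => (-m) * (pp (m+1) r * Q0 m (v + r)))). { intros t; simpl; ring. }
      apply D_scal. apply D_mult. apply pp_derive; lra. apply shift_derive. apply Q0_derive.
  - unfold target, kq.
    replace (m + 2 - 1) with (m + 1) by ring. replace (m + 1 - 1) with m by ring.
    replace (m + 2) with ((m + 1) + 1) by ring. rewrite !pp_succ.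
    assert (E := Q2_rel (v + r)).
    assert (Hz := one_z2_pos (v + r)).
    replace (Q2 m (v + r)) with ((-2*m*Q0 m (v+r) - 2*(m+1)*(v+r)*Q1 m (v+r)) / (1 + (v+r)*(v+r))).
    2:{ rewrite <- E. field. lra. }
    field. lra.
Qed.


Definition Kb v := 4*m*(1+v*v)*(1+Rabs v) + 5*m.

Lemma gm_mul r : 0 <= r -> (1 + r) * gm m r = Rpower (1 + r) (1 - m).
Proof.
  intros Hr. unfold gm. rewrite Rabs_pos_eq by lra.
  replace (1 - m) with (1 + - m) by ring. rewrite Rpower_plus, Rpower_1 by lra. ring.
Qed.

Lemma Bt_bound v r : 0 <= r -> Rabs (Bt v r) <= Kb v * Cv m v * Rpower (1 + r) (1 - m).
Proof.
  intros Hr.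
  assert (Hz := one_z2_pos (v + r)).
  assert (E : Bt v r = kq m (Q0 m) v r *
     (-2*m*(r*r)*(v+r)/(1+(v+r)*(v+r)) + 4*m*r*((v+r)*(v+r))/(1+(v+r)*(v+r)) - m*r)).
  { unfold Bt, kq, Q1. rewrite Qa_succ. replace (m + 2) with ((m + 1) + 1) by ring. rewrite !pp_succ.
    fold (Q0 m (v + r)). field. lra. }
  rewrite E, Rabs_mult.
  assert (B1 := kq_bound m Hm (Q0 m) v (Q_bound0 m Hm) r Hr).
  assert (B2 := br_bound m v r Hm Hr). fold (Kb v) in B2.
  rewrite <- gm_mul by exact Hr.
  apply Rle_trans with ((Cv m v * gm m r) * (Kb v * (1 + r))).
  apply Rmult_le_compat; try apply Rabs_pos; auto.
  right; ring.
Qed.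

Lemma RI_lin (f g : R -> R) a b A B : Cont f -> Cont g ->
  RInt (fun x => A * f x - B * g x) a b = A * RInt f a b - B * RInt g a b.
Proof.
  intros Hf Hg.
  rewrite (RInt_minus (V:=R_CompleteNormedModule) (fun x => A * f x) (fun x => B * g x)).
  - rewrite !RI_scal by auto. reflexivity.
  - apply exRI. apply Cont_mult. apply Cont_cst. auto.
  - apply exRI. apply Cont_mult. apply Cont_cst. auto.
Qed.

Lemma ode_id v : (1 + v*v) * Iinf (kq m (Q2 m) v) = m*(m-1) * Iinf (kq m (Q0 m) v).
Proof.
  assert (C0 : Cont (Q0 m)) by (intros z; eapply C_D; apply Q0_derive).
  assert (C2 : Cont (Q2 m)) by (intros z; eapply C_D; apply Q2_derive).
  assert (L0 := Iinf_lim m Hm (Q0 m) (Q_bound0 m Hm) C0 v).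
  assert (L2 := Iinf_lim m Hm (Q2 m) (Q_bound2 m Hm) C2 v).
  assert (L := is_lim_seq_minus' _ _ _ _ (is_lim_seq_scal_l _ (1 + v*v) _ L2 : is_lim_seq _ (Finite _)) (is_lim_seq_scal_l _ (m*(m-1)) _ L0 : is_lim_seq _ (Finite _))).
  assert (EB : forall n : nat, (1 + v*v) * RInt (kq m (Q2 m) v) 0 (INR n) - m*(m-1) * RInt (kq m (Q0 m) v) 0 (INR n)
                = Bt v (INR n)).
  { intros n. rewrite <- RI_lin by (apply kq_cont; auto).
    assert (HB0 : Bt v 0 = 0).
    { unfold Bt. rewrite !pp_nonpos by lra. ring. }
    transitivity (Bt v (INR n) - Bt v 0). 2: rewrite HB0; ring.
    apply is_RInt_unique.
    apply (is_RInt_derive (V:=R_CompleteNormedModule) (Bt v)).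
    - intros x _. apply Bt_derive.
    - intros x _. unfold target. apply (C_plus (fun r => (1 + v * v) * kq m (Q2 m) v r) (fun r => - (m * (m - 1) * kq m (Q0 m) v r))).
      apply C_mult. apply C_cst. apply kq_cont; auto.
      apply C_opp. apply C_mult. apply C_cst. apply kq_cont; auto. }
  assert (LB : is_lim_seq (fun n => Bt v (INR n)) 0).
  { apply is_lim_seq_Reals. intros eps He.
    assert (HK : 0 <= Kb v * Cv m v).
    { apply Rmult_le_pos. unfold Kb. generalize (Rabs_pos v) (Rle_0_sqr v). unfold Rsqr. intros. 
      assert (0 <= 4*m*(1+v*v)) by nra. assert (0 <= 4*m*(1+v*v)*(1+Rabs v)) by (apply Rmult_le_pos; lra). lra.
      left; apply Cv_pos; auto. }
    destruct (Ttail m Hm (Kb v * Cv m v * (m - 1)) ltac:(apply Rmult_le_pos; lra) eps He) as [A HA].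
    destruct (nat_above A) as [N HN]. exists N. intros n Hn.
    unfold Rdist. rewrite Rminus_0_r.
    assert (HnA : A <= INR n) by (eapply Rle_trans; [exact HN| apply le_INR; lia]).
    eapply Rle_lt_trans. apply Bt_bound. apply pos_INR.
    eapply Rle_lt_trans. 2: apply (HA (INR n) HnA).
    right. field. lra. }
  assert (L' : is_lim_seq (fun n => Bt v (INR n)) ((1 + v * v) * (Iinf (kq m (Q2 m) v)) - (m * (m - 1)) * (Iinf (kq m (Q0 m) v)))).
  { eapply is_lim_seq_ext. 2: exact L. intros n. simpl. rewrite <- EB. reflexivity. }
  assert (U := is_lim_seq_unique _ _ L'). rewrite (is_lim_seq_unique _ _ LB) in U.
  simpl in U. injection U. intros. lra.
Qed.

End ODE.

Lemma RInt_mono_n (f : R -> R) (n : nat) : (1 <= n)%nat -> Cont f -> (forall r, 0 <= r -> 0 <= f r) ->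
  RInt f 0 1 <= RInt f 0 (INR n).
Proof.
  intros Hn Hc Hp.
  assert (H1 : 1 <= INR n) by (replace 1 with (INR 1) by reflexivity; apply le_INR; lia).
  assert (E := RInt_diff f 1 (INR n) ltac:(lra) (exRI f 0 (INR n) Hc)).
  assert (0 <= RInt f 1 (INR n)).
  { apply RInt_ge_0. lra. apply exRI; auto. intros x Hx; apply Hp; lra. }
  lra.
Qed.

Lemma Iinf_pos (f : R -> R) : Cont f -> (forall r, 0 <= r -> 0 <= f r) -> 0 < RInt f 0 1 ->
  is_lim_seq (fun n => RInt f 0 (INR n)) (Iinf f) -> 0 < Iinf f.
Proof.
  intros Hc Hp H1 Hl.
  destruct (Rlt_le_dec 0 (Iinf f)) as [H|H]; [exact H|exfalso].
  apply is_lim_seq_Reals in Hl. destruct (Hl (RInt f 0 1) H1) as [N HN].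
  specialize (HN (S N) ltac:(lia)). unfold Rdist in HN.
  assert (H2 := RInt_mono_n f (S N) ltac:(lia) Hc Hp).
  rewrite Rabs_pos_eq in HN by lra. lra.
Qed.

Lemma Iinf_neg (f : R -> R) : Cont f -> (forall r, 0 <= r -> f r <= 0) -> RInt f 0 1 < 0 ->
  is_lim_seq (fun n => RInt f 0 (INR n)) (Iinf f) -> Iinf f < 0.
Proof.
  intros Hc Hp H1 Hl.
  destruct (Rlt_le_dec (Iinf f) 0) as [H|H]; [exact H|exfalso].
  apply is_lim_seq_Reals in Hl. destruct (Hl (- RInt f 0 1) ltac:(lra)) as [N HN].
  specialize (HN (S N) ltac:(lia)). unfold Rdist in HN.
  assert (Hc' : Cont (fun r => - f r)) by (intros x; apply C_opp; apply Hc).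
  assert (H2 := RInt_mono_n (fun r => - f r) (S N) ltac:(lia) Hc' ltac:(intros r Hr; specialize (Hp r Hr); lra)).
  rewrite (RInt_opp (V:=R_CompleteNormedModule)) in H2 by (apply exRI; auto).
  rewrite (RInt_opp (V:=R_CompleteNormedModule)) in H2 by (apply exRI; auto).
  change (opp (RInt f 0 1)) with (- RInt f 0 1) in H2.
  change (opp (RInt f 0 (INR (S N)))) with (- RInt f 0 (INR (S N))) in H2.
  rewrite Rabs_left1 in HN by lra. lra.
Qed.

Section Phi.
Variable m : R.
Hypothesis Hm : 1 < m.

Definition phi v := Iinf (kq m (Q0 m) v).
Definition dphi v := Iinf (kq m (Q1 m) v).
Definition ddphi v := Iinf (kq m (Q2 m) v).

Lemma C0 : Cont (Q0 m). Proof. intros z; eapply C_D; apply Q0_derive. Qed.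
Lemma C1 : Cont (Q1 m). Proof. intros z; eapply C_D; apply Q1_derive. Qed.
Lemma C2 : Cont (Q2 m). Proof. intros z; eapply C_D; apply Q2_derive. Qed.

Lemma phi_derive v : is_derive phi v (dphi v).
Proof.
  apply (Iinf_derive m Hm (Q0 m) (Q1 m) (Q2 m)); auto.
  apply Q0_derive. apply Q1_derive. apply C2. apply Q_bound0; auto. apply Q_bound1; auto.
Qed.

Lemma dphi_derive v : is_derive dphi v (ddphi v).
Proof.
  apply (Iinf_derive m Hm (Q1 m) (Q2 m) (Q3 m)); auto.
  apply Q1_derive. apply Q2_derive. intros z; apply Q3_cont. apply Q_bound1; auto. apply Q_bound2; auto.
Qed.

Lemma phi_ode v : (1 + v*v) * ddphi v = m*(m-1) * phi v.
Proof. apply ode_id; auto. Qed.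

Lemma phi_pos v : 0 < phi v.
Proof.
  unfold phi. apply Iinf_pos.
  - apply kq_cont; auto. apply C0.
  - intros r Hr. unfold kq. apply Rmult_le_pos. apply pp_ge0. left; apply Qa_pos.
  - apply RInt_gt_0. lra.
    + intros x Hx. unfold kq. apply Rmult_lt_0_compat. apply pp_gt0; lra. apply Qa_pos.
    + intros x _. apply kq_cont; auto. apply C0.
  - apply Iinf_lim; auto. apply Q_bound0; auto. apply C0.
Qed.

Lemma dphi0_neg : dphi 0 < 0.
Proof.
  unfold dphi. apply Iinf_neg.
  - apply kq_cont; auto. apply C1.
  - intros r Hr. unfold kq, Q1. rewrite Rplus_0_l.
    assert (0 <= pp m r) by apply pp_ge0. assert (0 < Qa (m+1) r) by apply Qa_pos.
    assert (0 <= m * r) by nra.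
    replace (pp m r * (-2 * m * r * Qa (m + 1) r)) with (- (2 * (pp m r * (m * r) * Qa (m+1) r))) by ring.
    assert (0 <= pp m r * (m * r) * Qa (m+1) r) by (apply Rmult_le_pos; [apply Rmult_le_pos|]; lra). lra.
  - assert (H : 0 < RInt (fun r => - kq m (Q1 m) 0 r) 0 1). 
      { apply RInt_gt_0. lra.
        - intros x Hx. unfold kq, Q1. rewrite Rplus_0_l.
          assert (0 < pp m x) by (apply pp_gt0; lra). assert (0 < Qa (m+1) x) by apply Qa_pos.
          assert (0 < m * x) by nra.
          replace (- (pp m x * (-2 * m * x * Qa (m + 1) x))) with (2 * (pp m x * (m * x) * Qa (m+1) x)) by ring.
          assert (0 < pp m x * (m * x) * Qa (m+1) x) by (apply Rmult_lt_0_compat; [apply Rmult_lt_0_compat|]; lra). lra.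
        - intros x _. apply C_opp. apply kq_cont; auto. apply C1. }
    rewrite (RInt_opp (V:=R_CompleteNormedModule)) in H. change (opp (RInt (kq m (Q1 m) 0) 0 1)) with (- RInt (kq m (Q1 m) 0) 0 1) in H. lra.
    apply exRI. apply kq_cont; auto. apply C1.
  - apply Iinf_lim; auto. apply Q_bound1; auto. apply C1.
Qed.

End Phi.

Lemma lim_unique_R (F : R -> R) a b :
  (forall eps, 0 < eps -> exists R0, forall R, R0 <= R -> Rabs (F R - a) < eps) ->
  (forall eps, 0 < eps -> exists R0, forall R, R0 <= R -> Rabs (F R - b) < eps) -> a = b.
Proof.
  intros Ha Hb. destruct (Req_dec a b) as [E|Ne]; [exact E|exfalso].
  set (e := Rabs (a - b) / 2).
  assert (He : 0 < e) by (unfold e; apply Rdiv_lt_0_compat; [apply Rabs_pos_lt; lra|lra]).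
  destruct (Ha e He) as [R1 H1]. destruct (Hb e He) as [R2 H2].
  specialize (H1 (Rmax R1 R2) (Rmax_l _ _)). specialize (H2 (Rmax R1 R2) (Rmax_r _ _)).
  assert (Rabs (a - b) <= Rabs (F (Rmax R1 R2) - a) + Rabs (F (Rmax R1 R2) - b)).
  { replace (a - b) with (- (F (Rmax R1 R2) - a) + (F (Rmax R1 R2) - b)) by ring.
    eapply Rle_trans. apply Rabs_triang. rewrite Rabs_Ropp. lra. }
  unfold e in *. lra.
Qed.

Lemma tri3 (A B x y : R) : Rabs (A - B) <= Rabs (x - A) + Rabs (x - y) + Rabs (y - B).
Proof.
  replace (A - B) with (- (x - A) + (x - y) + (y - B)) by ring.
  eapply Rle_trans. apply Rabs_triang. rewrite <- (Rabs_Ropp (x - A)).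
  apply Rplus_le_compat_r. apply Rabs_triang.
Qed.

Section Asym.
Variable m : R.
Hypothesis Hm : 1 < m.

Lemma Iinf_tail (f : R -> R) C : Cont f -> (forall r, 0 <= r -> Rabs (f r) <= C * gm m r) ->
  forall eps, 0 < eps -> exists R0, 0 <= R0 /\ forall R, R0 <= R -> Rabs (RInt f 0 R - Iinf f) < eps.
Proof.
  intros Hc Hb eps He.
  assert (HC : 0 <= C).
  { specialize (Hb 0 (Rle_refl 0)). generalize (Rabs_pos (f 0)) (gm_pos m 0). intros. nra. }
  destruct (Iinf_approx m Hm f C Hc Hb) as [_ H2].
  destruct (Ttail m Hm C HC eps He) as [A HA].
  exists (Rmax A 0). split. apply Rmax_r. intros R HR.
  eapply Rle_lt_trans. apply H2. eapply Rle_trans. 2: apply HR. apply Rmax_r.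
  apply HA. eapply Rle_trans. 2: apply HR. apply Rmax_l.
Qed.

Lemma Iinf_close (f g : R -> R) Cf Cg K : Cont f -> Cont g ->
  (forall r, 0 <= r -> Rabs (f r) <= Cf * gm m r) -> (forall r, 0 <= r -> Rabs (g r) <= Cg * gm m r) ->
  (forall r, 0 <= r -> Rabs (f r - g r) <= K * gm m r) ->
  Rabs (Iinf f - Iinf g) <= K / (m - 1).
Proof.
  intros Hf Hg Bf Bg Bfg.
  apply Rnot_lt_le. intros Hlt.
  set (e := (Rabs (Iinf f - Iinf g) - K / (m - 1)) / 2).
  assert (He : 0 < e) by (unfold e; lra).
  destruct (Iinf_tail f Cf Hf Bf e He) as [R1 [HR1 H1]].
  destruct (Iinf_tail g Cg Hg Bg e He) as [R2 [HR2 H2]].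
  set (R := Rmax R1 R2).
  specialize (H1 R (Rmax_l _ _)). specialize (H2 R (Rmax_r _ _)).
  assert (HR : 0 <= R) by (unfold R; eapply Rle_trans; [exact HR1| apply Rmax_l]).
  assert (Hfg : Cont (fun r => f r - g r)) by (intros x; apply C_plus; [apply Hf| apply C_opp; apply Hg]).
  assert (H3 := dom_int m Hm (fun r => f r - g r) K Hfg Bfg 0 R ltac:(lra)).
  rewrite (RInt_minus (V:=R_CompleteNormedModule) f g) in H3 by (apply exRI; auto).
  change (minus (RInt f 0 R) (RInt g 0 R)) with (RInt f 0 R - RInt g 0 R) in H3.
  replace (Rpower (1 + 0) (1 - m)) with 1 in H3 by (rewrite Rplus_0_r; unfold Rpower; rewrite ln_1, Rmult_0_r, exp_0; reflexivity). rewrite Rmult_1_r in H3.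
  assert (T := tri3 (Iinf f) (Iinf g) (RInt f 0 R) (RInt g 0 R)).
  unfold e in *. lra.
Qed.

End Asym.

Lemma Rpower_dec_base k a c : 0 <= k -> 0 < a <= c -> Rpower c (-k) <= Rpower a (-k).
Proof.
  intros Hk Hac. rewrite !Rpower_Ropp. apply Rinv_le_contravar. apply Rpower_pos.
  apply Rle_Rpower_l; lra.
Qed.

Lemma Rpower_sq x a : 0 < x -> Rpower (x * x) a = Rpower x (2 * a).
Proof.
  intros Hx. rewrite <- Rpower_mult_distr by lra. rewrite <- Rpower_plus. f_equal. ring.
Qed.

Lemma pp_le_pow m x : 1 <= m -> 0 <= x -> pp m x <= Rpower (1 + x) m.
Proof.
  intros Hm Hx. destruct (Rlt_le_dec 0 x).
  - rewrite pp_pos by lra. apply Rle_Rpower_l; lra.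
  - rewrite pp_nonpos by lra. left; apply Rpower_pos.
Qed.

Section Sc.
Variable m : R.
Hypothesis Hm : 1 < m.

Definition sc (e x : R) := pp m x * Rpower (e + (1 + Rabs x) * (1 + Rabs x)) (-m).

Lemma sq_pos x e : 0 <= e -> 0 < e + (1 + Rabs x) * (1 + Rabs x).
Proof. intros He. generalize (Rabs_pos x). intros. nra. Qed.

Lemma sc_cont e : 0 <= e -> Cont (sc e).
Proof.
  intros He x. unfold sc. apply C_mult. apply pp_cont; lra.
  apply (continuous_comp (fun x => e + (1 + Rabs x) * (1 + Rabs x)) (fun u => Rpower u (-m))).
  - apply C_plus. apply C_cst. apply C_mult; (apply C_plus; [apply C_cst| apply continuous_Rabs]).
  - eapply C_D. apply Rpower_derive. apply sq_pos; auto.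
Qed.

Lemma sc_nonneg e x : 0 <= sc e x.
Proof. unfold sc. apply Rmult_le_pos. apply pp_ge0. left; apply Rpower_pos. Qed.

Lemma sc_bound e : 0 <= e -> forall x, 0 <= x -> Rabs (sc e x) <= 1 * gm m x.
Proof.
  intros He x Hx. rewrite Rabs_pos_eq by apply sc_nonneg. rewrite Rmult_1_l.
  unfold sc, gm. rewrite Rabs_pos_eq by lra.
  assert (H1 := pp_le_pow m x ltac:(lra) Hx).
  assert (H2 : Rpower (e + (1 + x) * (1 + x)) (- m) <= Rpower ((1 + x) * (1 + x)) (- m)).
  { apply Rpower_dec_base. lra. split. nra. lra. }
  rewrite Rpower_sq in H2 by lra.
  apply Rle_trans with (Rpower (1 + x) m * Rpower (1 + x) (2 * - m)).
  apply Rmult_le_compat; auto. apply pp_ge0. left; apply Rpower_pos.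
  rewrite <- Rpower_plus. right. f_equal. ring.
Qed.

Lemma sc_diff e : 0 <= e -> forall x, 0 <= x -> Rabs (sc e x - sc 0 x) <= (m * e) * gm m x.
Proof.
  intros He x Hx. unfold sc, gm. rewrite !Rabs_pos_eq with (x := x) by lra. rewrite Rplus_0_l.
  set (a := (1 + x) * (1 + x)).
  assert (Ha : 1 <= a) by (unfold a; nra).
  set (F := fun t => Rpower t (-m)).
  assert (HM : exists c, a <= c <= a + e /\ F (a + e) - F a = (-m * Rpower c (-m - 1)) * ((a + e) - a)).
  { destruct (Req_dec e 0) as [E|E].
    - exists a. split. lra. rewrite E, Rplus_0_r. ring.
    - destruct (MVT_gen F a (a + e) (fun t => -m * Rpower t (-m - 1))) as [c [Hc1 Hc2]].
      + intros t Ht. rewrite Rmin_left, Rmax_right in Ht by lra. apply Rpower_derive. lra.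
      + intros t Ht. rewrite Rmin_left, Rmax_right in Ht by lra. apply continuity_pt_filterlim.
        eapply C_D. apply Rpower_derive. lra.
      + rewrite Rmin_left, Rmax_right in Hc1 by lra. exists c. split; auto. }
  destruct HM as [c [Hc HF]]. unfold F in HF.
  assert (Hp := pp_ge0 m x).
  assert (B1 : Rpower c (-m - 1) <= Rpower a (-m)).
  { apply Rle_trans with (Rpower a (-m - 1)).
    - replace (-m - 1) with (-(m+1)) by ring. apply Rpower_dec_base; lra.
    - apply Rle_Rpower. lra. lra. }
  assert (Hpos := Rpower_pos c (-m - 1)).
  replace (pp m x * Rpower (e + a) (- m) - pp m x * Rpower a (- m)) with (pp m x * (Rpower (a + e) (-m) - Rpower a (-m))) by (rewrite Rplus_comm; ring).
  rewrite HF. replace (a + e - a) with e by ring.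
  rewrite Rabs_mult, Rabs_pos_eq by exact Hp.
  replace (-m * Rpower c (-m - 1) * e) with (- (m * e * Rpower c (-m - 1))) by ring.
  rewrite Rabs_Ropp, Rabs_pos_eq by (apply Rmult_le_pos; [nra| lra]).
  assert (H1 := pp_le_pow m x ltac:(lra) Hx).
  apply Rle_trans with (Rpower (1 + x) m * (m * e * Rpower a (-m))).
  { apply Rmult_le_compat; try lra. apply Rmult_le_pos; [nra|lra]. apply Rmult_le_compat_l. nra. exact B1. }
  unfold a. rewrite Rpower_sq by lra.
  replace (Rpower (1 + x) m * (m * e * Rpower (1 + x) (2 * - m))) with (m * e * (Rpower (1 + x) m * Rpower (1 + x) (2 * - m))) by ring.
  rewrite <- Rpower_plus. right. f_equal. f_equal. ring.
Qed.

End Sc.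

Section Scale.
Variable m : R.
Hypothesis Hm : 1 < m.

Lemma scale_pt v y : 0 < v -> v * kq m (Q0 m) v (v*y + 0) = Rpower v (1-m) * sc m (1/(v*v)) y.
Proof.
  intros Hv. unfold kq, sc, Q0, Qa. rewrite Rplus_0_r.
  destruct (Rlt_le_dec 0 y) as [Hy|Hy].
  - rewrite !pp_pos by nra. rewrite Rabs_pos_eq by lra.
    rewrite <- Rpower_mult_distr by lra.
    replace (1 + (v + v * y) * (v + v * y)) with ((v*v) * (1/(v*v) + (1 + y) * (1 + y))) by (field; lra).
    assert (HB : 0 < 1/(v*v) + (1 + y) * (1 + y)) by (apply Rplus_lt_le_0_compat; [apply Rdiv_lt_0_compat; nra| apply Rle_0_sqr]).
    assert (Hvv : 0 < v * v) by nra.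
    rewrite <- Rpower_mult_distr by assumption.
    rewrite Rpower_sq by lra.
    transitivity (Rpower v (1 + m + 2 * - m) * (Rpower y m * Rpower (1 / (v * v) + (1 + y) * (1 + y)) (- m))).
    + rewrite !Rpower_plus, Rpower_1 by lra. ring.
    + replace (1 + m + 2 * - m) with (1 - m) by ring. reflexivity.
  - rewrite !pp_nonpos by nra. ring.
Qed.

Lemma scale_int v R : 0 < v -> RInt (sc m (1/(v*v))) 0 R = Rpower v (m-1) * RInt (kq m (Q0 m) v) 0 (v*R).
Proof.
  intros Hv.
  assert (Hc : Cont (kq m (Q0 m) v)) by (apply kq_cont; auto; apply C0).
  assert (E := RInt_comp_lin (V:=R_CompleteNormedModule) (kq m (Q0 m) v) v 0 0 R (exRI _ _ _ Hc)).
  rewrite Rmult_0_r, !Rplus_0_r in E.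
  rewrite <- E.
  rewrite (RInt_ext (fun y => scal v (kq m (Q0 m) v (v*y+0))) (fun y => Rpower v (1-m) * sc m (1/(v*v)) y)).
  2:{ intros x _. change (scal v (kq m (Q0 m) v (v * x + 0))) with (v * kq m (Q0 m) v (v * x + 0)). apply scale_pt; auto. }
  rewrite RI_scal by (apply sc_cont; auto; left; apply Rdiv_lt_0_compat; nra).
  rewrite <- Rmult_assoc, <- Rpower_plus. replace (m - 1 + (1 - m)) with 0 by ring.
  rewrite Rpower_O by lra. rewrite Rmult_1_l. reflexivity.
Qed.

Lemma phi_scaled v : 0 < v -> Rpower v (m-1) * phi m v = Iinf (sc m (1/(v*v))).
Proof.
  intros Hv.
  assert (He : 0 <= 1/(v*v)) by (left; apply Rdiv_lt_0_compat; nra).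
  apply (lim_unique_R (fun R => RInt (sc m (1/(v*v))) 0 R)).
  - intros eps Heps.
    set (K := Rpower v (m-1)). assert (HK : 0 < K) by apply Rpower_pos.
    destruct (Iinf_tail m Hm (kq m (Q0 m) v) (Cv m v) (kq_cont m Hm _ v (C0 m)) (kq_bound m Hm _ v (Q_bound0 m Hm)) (eps / K)) as [R0 [HR0 H0]].
    { apply Rdiv_lt_0_compat; lra. }
    exists (R0 / v). intros R HR. rewrite scale_int by auto. fold K.
    replace (K * RInt (kq m (Q0 m) v) 0 (v * R) - K * phi m v) with (K * (RInt (kq m (Q0 m) v) 0 (v * R) - phi m v)) by ring.
    rewrite Rabs_mult, (Rabs_pos_eq K) by lra.
    assert (R0 <= v * R).
    { apply Rmult_le_compat_l with (r := v) in HR. replace (v * (R0 / v)) with R0 in HR by (field; lra). lra. lra. }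
    specialize (H0 (v * R) H). unfold phi.
    apply Rmult_lt_compat_l with (r := K) in H0; auto. replace (K * (eps / K)) with eps in H0 by (field; lra). lra.
  - intros eps Heps.
    destruct (Iinf_tail m Hm (sc m (1/(v*v))) 1 (sc_cont m Hm _ He) (sc_bound m Hm _ He) eps Heps) as [R0 [_ H0]].
    exists R0. exact H0.
Qed.

Definition c1 := Iinf (sc m 0).

Lemma c1_pos : 0 < c1.
Proof.
  unfold c1. apply Iinf_pos.
  - apply sc_cont; lra.
  - intros; apply sc_nonneg.
  - apply RInt_gt_0. lra.
    + intros x Hx. unfold sc. apply Rmult_lt_0_compat. apply pp_gt0; lra. apply Rpower_pos.
    + intros x _. apply sc_cont; lra.
  - apply (Iinf_approx m Hm _ 1 (sc_cont m Hm 0 (Rle_refl 0)) (sc_bound m Hm 0 (Rle_refl 0))).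
Qed.

Lemma phi_asym v : 0 < v -> Rabs (Rpower v (m-1) * phi m v - c1) <= m / (m - 1) * (1 / (v*v)).
Proof.
  intros Hv. rewrite phi_scaled by auto. unfold c1.
  assert (He : 0 <= 1/(v*v)) by (left; apply Rdiv_lt_0_compat; nra).
  eapply Rle_trans.
  apply (Iinf_close m Hm _ _ 1 1 (m * (1/(v*v)))).
  apply sc_cont; auto. apply sc_cont; lra. apply sc_bound; auto. apply sc_bound; lra.
  apply sc_diff; auto.
  right. field. lra.
Qed.

End Scale.

Definition Tend (f : R -> R) (L : R) := forall eps, 0 < eps -> exists M, forall v, M < v -> Rabs (f v - L) < eps.

Lemma Tend_ext (f g : R -> R) L M0 : (forall v, M0 < v -> f v = g v) -> Tend f L -> Tend g L.
Proof.
  intros E H eps He. destruct (H eps He) as [M HM]. exists (Rmax M M0). intros v Hv.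
  rewrite <- E. apply HM. eapply Rle_lt_trans; [apply Rmax_l| exact Hv].
  eapply Rle_lt_trans; [apply Rmax_r| exact Hv].
Qed.

Lemma Tend_comp_cont (g f : R -> R) a : continuous g a -> Tend f a -> Tend (fun v => g (f v)) (g a).
Proof.
  intros Hg Hf eps He. destruct (cont_eps_inv g a Hg eps He) as [d [Hd H]].
  destruct (Hf d Hd) as [M HM]. exists M. intros v Hv. apply H. apply HM. exact Hv.
Qed.

Lemma Tend_mult (f g : R -> R) a b : Tend f a -> Tend g b -> Tend (fun v => f v * g v) (a * b).
Proof.
  intros Hf Hg eps He.
  set (e1 := Rmin 1 (eps / (2 * (Rabs b + 1)))).
  set (e2 := eps / (2 * (Rabs a + 2))).
  assert (Hb1 : 0 < Rabs b + 1) by (generalize (Rabs_pos b); lra).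
  assert (Ha2 : 0 < Rabs a + 2) by (generalize (Rabs_pos a); lra).
  assert (He1 : 0 < e1) by (apply Rmin_pos; [lra| apply Rdiv_lt_0_compat; lra]).
  assert (He2 : 0 < e2) by (apply Rdiv_lt_0_compat; lra).
  destruct (Hf e1 He1) as [M1 H1]. destruct (Hg e2 He2) as [M2 H2].
  exists (Rmax M1 M2). intros v Hv.
  specialize (H1 v (Rle_lt_trans _ _ _ (Rmax_l _ _) Hv)).
  specialize (H2 v (Rle_lt_trans _ _ _ (Rmax_r _ _) Hv)).
  assert (Hfa : Rabs (f v) <= Rabs a + 1).
  { replace (f v) with ((f v - a) + a) by ring. eapply Rle_trans. apply Rabs_triang.
    assert (e1 <= 1) by apply Rmin_l. lra. }
  replace (f v * g v - a * b) with (f v * (g v - b) + (f v - a) * b) by ring.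
  eapply Rle_lt_trans. apply Rabs_triang. rewrite !Rabs_mult.
  assert (A1 : Rabs (f v) * Rabs (g v - b) <= (Rabs a + 2) * e2).
  { apply Rmult_le_compat; try apply Rabs_pos; lra. }
  assert (A2 : Rabs (f v - a) * Rabs b <= e1 * (Rabs b + 1)).
  { apply Rmult_le_compat; try apply Rabs_pos; lra. }
  assert (A3 : e1 * (Rabs b + 1) <= eps / 2).
  { apply Rle_trans with (eps / (2 * (Rabs b + 1)) * (Rabs b + 1)).
    apply Rmult_le_compat_r. lra. apply Rmin_r. right; field; lra. }
  assert (A4 : (Rabs a + 2) * e2 = eps / 2) by (unfold e2; field; lra).
  assert (A5 : Rabs (f v) * Rabs (g v - b) < eps / 2).
  { apply Rle_lt_trans with ((Rabs a + 1) * Rabs (g v - b)).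
    apply Rmult_le_compat_r. apply Rabs_pos. exact Hfa.
    apply Rle_lt_trans with ((Rabs a + 1) * e2). apply Rmult_le_compat_l. generalize (Rabs_pos a); lra. lra.
    rewrite <- A4. apply Rmult_lt_compat_r; lra. }
  lra.
Qed.

Lemma Tend_is_lim (f : R -> R) L : Tend f L -> is_lim f p_infty L.
Proof.
  intros H. unfold is_lim. apply filterlim_locally. intros eps.
  destruct (H eps (cond_pos eps)) as [M HM]. exists M. intros x Hx. apply HM; auto.
Qed.

Lemma Tend_is_lim_m (f : R -> R) L : Tend (fun v => f (- v)) L -> is_lim f m_infty L.
Proof.
  intros H. unfold is_lim. apply filterlim_locally. intros eps.
  destruct (H eps (cond_pos eps)) as [M HM]. exists (- M). intros x Hx.
  specialize (HM (- x) ltac:(lra)). rewrite Ropp_involutive in HM. exact HM.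
Qed.

Lemma Tend_lt (f : R -> R) L B : Tend f L -> L < B -> exists M, forall v, M < v -> f v < B.
Proof.
  intros H HLB. destruct (H (B - L) ltac:(lra)) as [M HM]. exists M. intros v Hv.
  specialize (HM v Hv). apply Rabs_lt_between in HM. lra.
Qed.

Lemma Cauchy_MVT (f G df dG : R -> R) a b : a < b ->
  (forall t, a <= t <= b -> is_derive f t (df t)) -> (forall t, a <= t <= b -> is_derive G t (dG t)) ->
  exists c, a <= c <= b /\ df c * (G b - G a) = dG c * (f b - f a).
Proof.
  intros Hab Hf HG.
  set (H := fun t => f t * (G b - G a) - G t * (f b - f a)).
  destruct (MVT_gen H a b (fun t => df t * (G b - G a) - dG t * (f b - f a))) as [c [Hc E]].
  - intros t Ht. rewrite Rmin_left, Rmax_right in Ht by lra. unfold H, Rminus.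
    eapply D_eq. apply D_plus. apply (D_mult f (fun _ => G b + - G a)). apply Hf; lra. apply is_derive_cst.
    apply (is_derive_ext (fun t => (-1) * (G t * (f b + - f a)))). { intros; simpl; ring. }
    apply D_scal. apply (D_mult G (fun _ => f b + - f a)). apply HG; lra. apply is_derive_cst. ring.
  - intros t Ht. rewrite Rmin_left, Rmax_right in Ht by lra. apply continuity_pt_filterlim.
    unfold H. apply C_plus. apply C_mult. eapply C_D. apply Hf; lra. apply C_cst.
    apply C_opp. apply C_mult. eapply C_D. apply HG; lra. apply C_cst.
  - rewrite Rmin_left, Rmax_right in Hc by lra. exists c. split; auto.
    unfold H in E. assert (E2 : (df c * (G b - G a) - dG c * (f b - f a)) * (b - a) = 0) by lra.
    apply Rmult_integral in E2. destruct E2 as [E2|E2]; lra.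
Qed.

Lemma lhopital (f G df dG : R -> R) A L :
  (forall v, A < v -> is_derive f v (df v)) -> (forall v, A < v -> is_derive G v (dG v)) ->
  (forall v, A < v -> 0 < dG v) -> (forall K, exists M, forall v, M < v -> K < G v) ->
  Tend (fun v => df v / dG v) L -> Tend (fun v => f v / G v) L.
Proof.
  intros Hf HG HdG Hinf HT eps He.
  destruct (HT (eps/2) ltac:(lra)) as [A1 HA1].
  set (a := Rmax A1 A + 1).
  assert (Ha1 : A1 < a) by (unfold a; generalize (Rmax_l A1 A); lra).
  assert (HaA : A < a) by (unfold a; generalize (Rmax_r A1 A); lra).
  set (B := Rabs (f a) + (Rabs L + eps) * Rabs (G a)).
  assert (HB : 0 <= B) by (unfold B; generalize (Rabs_pos (f a)) (Rabs_pos L) (Rabs_pos (G a)); intros; nra).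
  destruct (Hinf (Rmax (G a) (2 * B / eps)) ) as [M HM].
  exists (Rmax M a). intros v Hv.
  assert (Hva : a < v) by (eapply Rle_lt_trans; [apply Rmax_r| exact Hv]).
  assert (HGv : Rmax (G a) (2 * B / eps) < G v) by (apply HM; eapply Rle_lt_trans; [apply Rmax_l| exact Hv]).
  assert (HGa : G a < G v) by (eapply Rle_lt_trans; [apply Rmax_l| exact HGv]).
  assert (HGB : 2 * B / eps < G v) by (eapply Rle_lt_trans; [apply Rmax_r| exact HGv]).
  assert (HGv0 : 0 < G v).
  { apply Rle_lt_trans with (2 * B / eps). apply Rmult_le_pos. lra. left; apply Rinv_0_lt_compat; lra. exact HGB. }
  destruct (Cauchy_MVT f G df dG a v Hva) as [c [Hc E]].
  { intros t Ht. apply Hf. lra. } { intros t Ht. apply HG. lra. }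
  assert (Hdc := HdG c ltac:(lra)).
  set (th := (f v - f a) / (G v - G a)).
  assert (Hth : th = df c / dG c) by (unfold th; field_simplify_eq; try lra; split; lra).
  assert (Hth2 : Rabs (th - L) < eps / 2) by (rewrite Hth; apply HA1; lra).
  assert (Ef : f v = f a + th * (G v - G a)) by (unfold th; field; lra).
  replace (f v / G v - L) with ((f a - th * G a) / G v + (th - L)) by (rewrite Ef; field; lra).
  eapply Rle_lt_trans. apply Rabs_triang.
  assert (Hth3 : Rabs th <= Rabs L + eps).
  { replace th with ((th - L) + L) by ring. eapply Rle_trans. apply Rabs_triang. lra. }
  assert (Hn : Rabs (f a - th * G a) <= B).
  { unfold B. unfold Rminus. eapply Rle_trans. apply Rabs_triang. rewrite Rabs_Ropp, Rabs_mult.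
    apply Rplus_le_compat_l. apply Rmult_le_compat_r. apply Rabs_pos. exact Hth3. }
  assert (Rabs ((f a - th * G a) / G v) < eps / 2 \/ Rabs ((f a - th * G a) / G v) <= eps / 2).
  { right. unfold Rdiv. rewrite Rabs_mult, Rabs_inv, (Rabs_pos_eq (G v)) by lra.
    apply Rmult_le_reg_r with (G v). lra. rewrite Rmult_assoc, Rinv_l by lra.
    apply Rle_trans with B. lra.
    apply Rmult_lt_compat_l with (r := eps) in HGB; [|lra].
    replace (eps * (2 * B / eps)) with (2 * B) in HGB by (field; lra). lra. }
  lra.
Qed.

Lemma const_of_deriv0 (F dF : R -> R) : (forall v, is_derive F v (dF v)) -> (forall v, dF v = 0) ->
  forall v, F v = F 0.
Proof.
  intros HD H0 v.
  destruct (MVT_gen F 0 v dF) as [c [_ E]].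
  - intros; apply HD.
  - intros; apply continuity_pt_filterlim; eapply C_D; apply HD.
  - rewrite H0 in E. lra.
Qed.

Lemma wr_const (f df ddf g dg ddg : R -> R) (c : R) :
  (forall v, is_derive f v (df v)) -> (forall v, is_derive df v (ddf v)) ->
  (forall v, is_derive g v (dg v)) -> (forall v, is_derive dg v (ddg v)) ->
  (forall v, (1 + v*v) * ddf v = c * f v) -> (forall v, (1 + v*v) * ddg v = c * g v) ->
  forall v, f v * dg v - df v * g v = f 0 * dg 0 - df 0 * g 0.
Proof.
  intros Hf Hdf Hg Hdg Ef Eg.
  apply (const_of_deriv0 (fun v => f v * dg v - df v * g v) (fun v => f v * ddg v - ddf v * g v)).
  - intros v. unfold Rminus. eapply D_eq. apply D_plus. apply D_mult; auto.
    apply (is_derive_ext (fun v => (-1) * (df v * g v))). { intros; simpl; ring. }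
    apply D_scal. apply D_mult; auto. ring.
  - intros v. assert (Hz := one_z2_pos v).
    apply Rmult_eq_reg_l with (1 + v*v). 2: lra.
    replace ((1 + v * v) * (f v * ddg v - ddf v * g v)) with (f v * ((1 + v*v) * ddg v) - ((1 + v*v) * ddf v) * g v) by ring.
    rewrite Ef, Eg. ring.
Qed.

Section Main.
Variable m : R.
Hypothesis Hm : 1 < m.

Definition ps v := phi m (- v).
Definition dps v := - dphi m (- v).
Definition ddps v := ddphi m (- v).

Lemma neg_derive v : is_derive (fun v => - v) v (-1).
Proof. apply (is_derive_ext (fun v => (-1) * v)). intros; simpl; ring. eapply D_eq. apply D_scal, D_id. ring. Qed.

Lemma ps_derive v : is_derive ps v (dps v).
Proof.
  unfold ps, dps. eapply D_eq. apply (D_comp (phi m) (fun v => - v)). apply phi_derive; auto. apply neg_derive. ring.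
Qed.

Lemma dps_derive v : is_derive dps v (ddps v).
Proof.
  unfold dps, ddps. apply (is_derive_ext (fun v => (-1) * dphi m (- v))). { intros; simpl; ring. }
  eapply D_eq. apply D_scal. apply (D_comp (dphi m) (fun v => - v)). apply dphi_derive; auto. apply neg_derive. ring.
Qed.

Lemma ps_ode v : (1 + v*v) * ddps v = m*(m-1) * ps v.
Proof. unfold ddps, ps. rewrite <- phi_ode by auto. f_equal. ring. Qed.

Definition w0 := phi m 0 * dps 0 - dphi m 0 * ps 0.

Lemma w0_pos : 0 < w0.
Proof.
  unfold w0, dps, ps. rewrite Ropp_0.
  assert (H1 := phi_pos m Hm 0). assert (H2 := dphi0_neg m Hm). nra.
Qed.

Lemma wr_phi_ps v : phi m v * dps v - dphi m v * ps v = w0.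
Proof.
  apply (wr_const (phi m) (dphi m) (ddphi m) ps dps ddps (m*(m-1))).
  apply phi_derive; auto. apply dphi_derive; auto. apply ps_derive. apply dps_derive.
  apply phi_ode; auto. apply ps_ode.
Qed.

Lemma Tend_phi : Tend (fun v => Rpower v (m-1) * phi m v) (c1 m).
Proof.
  intros eps He.
  exists (Rmax 1 (m / (m-1) / eps)). intros v Hv.
  assert (Hv1 : 1 < v) by (eapply Rle_lt_trans; [apply Rmax_l| exact Hv]).
  assert (Hv2 : m / (m-1) / eps < v) by (eapply Rle_lt_trans; [apply Rmax_r| exact Hv]).
  eapply Rle_lt_trans. apply phi_asym; auto. lra.
  assert (0 < m / (m - 1)) by (apply Rdiv_lt_0_compat; lra).
  apply Rmult_lt_reg_r with (v * v * / (m / (m-1))). apply Rmult_lt_0_compat. nra. apply Rinv_0_lt_compat; lra.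
  replace (m / (m - 1) * (1 / (v * v)) * (v * v * / (m / (m - 1)))) with 1 by (field; lra).
  apply Rmult_lt_compat_l with (r := eps) in Hv2; auto.
  replace (eps * (m / (m - 1) / eps)) with (m / (m-1)) in Hv2 by (field; lra).
  apply Rle_lt_trans with (eps * v * / (m / (m - 1))).
  - apply Rmult_le_reg_r with (m / (m-1)). lra. rewrite Rmult_assoc, Rinv_l by lra. lra.
  - replace (eps * (v * v * / (m / (m - 1)))) with (eps * v * / (m / (m - 1)) * v) by ring.
    rewrite <- (Rmult_1_r (eps * v * / (m / (m - 1)))) at 1.
    apply Rmult_lt_compat_l. apply Rmult_lt_0_compat. nra. apply Rinv_0_lt_compat; lra. lra.
Qed.

Definition c2 := w0 / ((2*m - 1) * c1 m).

Lemma c2_pos : 0 < c2.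
Proof. unfold c2. apply Rdiv_lt_0_compat. apply w0_pos. apply Rmult_lt_0_compat. lra. apply c1_pos; auto. Qed.

Lemma Tend_ps : Tend (fun v => ps v / Rpower v m) c2.
Proof.
  set (h := fun v => ps v / phi m v).
  set (dh := fun v => w0 / (phi m v * phi m v)).
  set (G := fun v => Rpower v (2*m-1)).
  set (dG := fun v => (2*m-1) * Rpower v (2*m-1-1)).
  set (L := w0 / ((2*m-1) * (c1 m * c1 m))).
  assert (Hc1 := c1_pos m Hm).
  assert (HL : Tend (fun v => h v / G v) L).
  { apply (lhopital h G dh dG 0 L).
    - intros v _. unfold h, dh. assert (Hp := phi_pos m Hm v).
      eapply D_eq. apply (is_derive_ext (fun v => ps v * / phi m v)). { intros; reflexivity. }
      apply D_mult. apply ps_derive. apply (is_derive_inv (phi m)). apply phi_derive; auto. lra.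
      rewrite <- (wr_phi_ps v). simpl. field. lra.
    - intros v Hv. apply Rpower_derive; lra.
    - intros v Hv. unfold dG. apply Rmult_lt_0_compat. lra. apply Rpower_pos.
    - intros K. exists (Rmax 1 K). intros v Hv. unfold G.
      assert (1 < v) by (eapply Rle_lt_trans; [apply Rmax_l| exact Hv]).
      assert (K < v) by (eapply Rle_lt_trans; [apply Rmax_r| exact Hv]).
      apply Rlt_le_trans with v. lra. rewrite <- (Rpower_1 v) at 1 by lra. apply Rle_Rpower; lra.
    - apply (Tend_ext (fun v => (fun x => w0 / ((2*m-1) * (x * x))) (Rpower v (m-1) * phi m v)) _ _ 0).
      + intros v Hv. unfold dh, dG. replace (2 * m - 1 - 1) with ((m-1) + (m-1)) by ring.
        rewrite Rpower_plus. assert (Hp := phi_pos m Hm v). assert (Hr := Rpower_pos v (m-1)).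
        field. split; lra.
      + unfold L. apply (Tend_comp_cont (fun x => w0 / ((2*m-1) * (x * x)))).
        * apply continuity_pt_filterlim. apply continuity_pt_div. apply continuity_pt_const. intros a b; reflexivity.
          apply continuity_pt_mult. apply continuity_pt_const. intros a b; reflexivity.
          apply continuity_pt_mult; apply continuity_pt_id. apply Rmult_integral_contrapositive. split. lra. nra.
        * apply Tend_phi. }
  assert (HM := Tend_mult _ _ _ _ HL Tend_phi).
  assert (Eq : forall v, 0 < v -> h v / G v * (Rpower v (m - 1) * phi m v) = ps v / Rpower v m).
  { intros v Hv. unfold h, G. assert (Hp := phi_pos m Hm v).
    replace (2 * m - 1) with (m + (m - 1)) by ring. rewrite Rpower_plus.
    assert (Hr := Rpower_pos v (m-1)). assert (Hr2 := Rpower_pos v m). field. lra. }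
  replace c2 with (L * c1 m) by (unfold c2, L; field; lra).
  exact (Tend_ext _ _ _ 0 Eq HM).
Qed.

End Main.

Definition Ck (n : nat) (f : R -> R) := forall k, (k <= n)%nat -> forall x, ex_derive_n f k x.

Lemma Ck_ext n (f g : R -> R) : (forall x, f x = g x) -> Ck n f -> Ck n g.
Proof. intros E H k Hk x. apply (ex_derive_n_ext f g k x E). apply H; auto. Qed.

Lemma Derive_n_shift (f : R -> R) j t : Derive_n f (S j) t = Derive_n (Derive f) j t.
Proof.
  replace (S j) with (j + 1)%nat by lia. rewrite <- (Derive_n_comp f j 1).
  reflexivity.
Qed.

Lemma Ck_S n (f f' : R -> R) : (forall x, is_derive f x (f' x)) -> Ck n f' -> Ck (S n) f.
Proof.
  intros Hd H k Hk x. destruct k as [|k]. simpl; exact I.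
  destruct k as [|j].
  - simpl. exists (f' x). apply Hd.
  - change (ex_derive (Derive_n f (S j)) x).
    apply (ex_derive_ext (Derive_n f' j : R -> R)).
    { intros t. rewrite Derive_n_shift. apply Derive_n_ext. intros u. symmetry. apply is_derive_unique. apply Hd. }
    apply (H (S j)). lia.
Qed.

Lemma Ck_down n f : Ck (S n) f -> Ck n f.
Proof. intros H k Hk. apply H. lia. Qed.

Lemma Ck_ex n f : Ck (S n) f -> forall x, ex_derive f x.
Proof. intros H x. exact (H 1%nat ltac:(lia) x). Qed.

Lemma Ck_Der n (f : R -> R) : Ck (S n) f -> Ck n (Derive f).
Proof.
  intros H k Hk x. destruct k as [|j]. simpl; exact I.
  change (ex_derive (Derive_n (Derive f) j) x).
  apply (ex_derive_ext (Derive_n f (S j) : R -> R)).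
  { intros t. apply Derive_n_shift. }
  apply (H (S (S j))). lia.
Qed.

Lemma Ck_plus n : forall f g, Ck n f -> Ck n g -> Ck n (fun x => f x + g x).
Proof.
  induction n as [|n IH]; intros f g Hf Hg.
  - intros k Hk x. replace k with 0%nat by lia. simpl; exact I.
  - apply (Ck_S n _ (fun x => Derive f x + Derive g x)).
    + intros x. apply D_plus; apply Derive_correct; eapply Ck_ex; eauto.
    + apply (IH (Derive f) (Derive g)); apply Ck_Der; assumption.
Qed.

Lemma Ck_mult n : forall f g, Ck n f -> Ck n g -> Ck n (fun x => f x * g x).
Proof.
  induction n as [|n IH]; intros f g Hf Hg.
  - intros k Hk x. replace k with 0%nat by lia. simpl; exact I.
  - apply (Ck_S n _ (fun x => Derive f x * g x + f x * Derive g x)).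
    + intros x. apply D_mult; apply Derive_correct; eapply Ck_ex; eauto.
    + apply (Ck_plus n (fun x => Derive f x * g x) (fun x => f x * Derive g x)).
      * apply (IH (Derive f) g). apply Ck_Der; exact Hf. apply Ck_down; exact Hg.
      * apply (IH f (Derive g)). apply Ck_down; exact Hf. apply Ck_Der; exact Hg.
Qed.

Lemma Ck_cst n : forall c, Ck n (fun _ => c).
Proof.
  induction n as [|n IH]; intros c.
  - intros k Hk x. replace k with 0%nat by lia. simpl; exact I.
  - apply (Ck_S n _ (fun _ => 0)). intros; apply is_derive_cst. apply IH.
Qed.

Lemma Ck_id n : Ck n (fun x => x).
Proof.
  destruct n as [|n].
  - intros k Hk x. replace k with 0%nat by lia. simpl; exact I.
  - apply (Ck_S n _ (fun _ => 1)). intros; apply D_id. apply Ck_cst.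
Qed.

Definition hh (x : R) := / (1 + x*x).

Lemma hh_derive x : is_derive hh x (-2 * x * (hh x * hh x)).
Proof.
  unfold hh. assert (Hz := one_z2_pos x).
  eapply D_eq. apply (is_derive_inv (fun x => 1 + x*x)).
  apply (D_plus (fun _ => 1) (fun x => x * x)). apply is_derive_cst. apply D_mult; apply D_id. lra.
  simpl. field. lra.
Qed.

Lemma Ck_hh n : Ck n hh.
Proof.
  induction n as [|n IH].
  - intros k Hk x. replace k with 0%nat by lia. simpl; exact I.
  - apply (Ck_S n _ (fun x => -2 * x * (hh x * hh x))). apply hh_derive.
    apply Ck_mult. apply Ck_mult. apply Ck_cst. apply Ck_id. apply Ck_mult; auto.
Qed.

Lemma solution_smooth (c : R) (f f1 f2 : R -> R) :
  (forall x, is_derive f x (f1 x)) -> (forall x, is_derive f1 x (f2 x)) ->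
  (forall x, f2 x = c * hh x * f x) -> forall n x, ex_derive_n f n x.
Proof.
  intros H1 H2 E.
  assert (forall n, Ck n f /\ Ck n f1).
  { induction n as [|n [IHa IHb]].
    - split; intros k Hk x; replace k with 0%nat by lia; simpl; exact I.
    - split.
      + apply (Ck_S n f f1); auto.
      + apply (Ck_S n f1 f2); auto. apply (Ck_ext n (fun x => c * hh x * f x)). intros; symmetry; apply E.
        apply Ck_mult; auto. apply Ck_mult. apply Ck_cst. apply Ck_hh. }
  intros n x. apply (proj1 (H n)). lia.
Qed.

Lemma sol_props (g : R) (f f1 f2 : R -> R) :
  (forall x, is_derive f x (f1 x)) -> (forall x, is_derive f1 x (f2 x)) ->
  (forall x, (1 + x*x) * f2 x = g * (g + 1) * f x) ->
  is_solution g f /\ smooth f /\ (forall x, Derive f x = f1 x).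
Proof.
  intros H1 H2 E.
  assert (D1 : forall x, Derive f x = f1 x) by (intros; apply is_derive_unique; auto).
  assert (D2 : forall x, Derive_n f 2 x = f2 x).
  { intros x. simpl. rewrite (Derive_ext (fun x => Derive f x) f1) by (intros; apply D1).
    apply is_derive_unique; auto. }
  split; [|split; [|exact D1]].
  - split; [|split].
    + intros x. eexists; apply H1.
    + intros x. simpl. apply (ex_derive_ext f1). intros; symmetry; apply D1. eexists; apply H2.
    + intros x. unfold L0, Wt. rewrite D2. assert (Hz := one_z2_pos x).
      replace (x ^ 2) with (x * x) by ring.
      apply Rmult_eq_reg_l with (1 + x*x). 2: lra.
      rewrite Rmult_0_r. replace ((1 + x * x) * (- f2 x + g * (g + 1) / (1 + x * x) * f x)) with (- ((1 + x*x) * f2 x) + g * (g+1) * f x) by (field; lra).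
      rewrite E. ring.
  - intros n x. apply (solution_smooth (g * (g+1)) f f1 f2 H1 H2).
    intros y. unfold hh. assert (Hz := one_z2_pos y).
    apply Rmult_eq_reg_l with (1 + y*y). 2: lra. rewrite E. field. lra.
Qed.

Lemma extract (g : R) (h : R -> R) : is_solution g h ->
  (forall x, is_derive h x (Derive h x)) /\ (forall x, is_derive (Derive h) x (Derive (Derive h) x)) /\
  (forall x, (1 + x*x) * Derive (Derive h) x = g * (g + 1) * h x).
Proof.
  intros [H1 [H2 H3]]. split; [|split].
  - intros x. apply Derive_correct. apply H1.
  - intros x. apply Derive_correct. apply H2.
  - intros x. specialize (H3 x). unfold L0, Wt in H3.
    change (Derive_n h 2 x) with (Derive (Derive h) x) in H3.
    assert (Hz := one_z2_pos x).
    replace (x ^ 2) with (x * x) in H3 by ring.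
    apply Rmult_eq_compat_l with (r := 1 + x*x) in H3.
    assert (E : (1 + x * x) * (- Derive (Derive h) x + g * (g + 1) / (1 + x * x) * h x)
      = - ((1 + x * x) * Derive (Derive h) x) + g * (g + 1) * h x) by (field; lra).
    rewrite E in H3. lra.
Qed.

Lemma ratio_le2 (F G : R -> R) M : (forall v, M < v -> F v / G v < 2) -> (forall v, M < v -> 0 < G v) ->
  forall v, M < v -> F v <= 2 * G v.
Proof.
  intros H1 H2 v Hv. specialize (H1 v Hv). specialize (H2 v Hv).
  apply Rmult_lt_compat_r with (r := G v) in H1; auto.
  unfold Rdiv in H1. rewrite Rmult_assoc, Rinv_l in H1 by lra. lra.
Qed.

Theorem proposition2p4 (gamma : R) (hgamma : 1 / 2 < gamma) :
  exists psi1 psi2 : R -> R,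
    smooth psi1 /\ smooth psi2 /\
    (forall v, 0 < psi1 v) /\ (forall v, 0 < psi2 v) /\
    is_solution gamma psi1 /\ is_solution gamma psi2 /\
    (* (1) *)
    (forall v, psi1 (- v) = psi2 v) /\
    (* (2) basis of the solution space, Wronskian = 1 *)
    (forall a b : R, (forall v, a * psi1 v + b * psi2 v = 0) -> a = 0 /\ b = 0) /\
    (forall phi : R -> R, is_solution gamma phi ->
       exists a b : R, forall v, phi v = a * psi1 v + b * psi2 v) /\
    (forall v, wronskian psi1 psi2 v = 1) /\
    (* (3) bounds and asymptotics *)
    (exists v0 C c1 c2 : R, 0 < v0 /\ 0 < C /\ 0 < c1 /\ 0 < c2 /\
      (forall v, v0 <= v -> psi1 v <= C * Rpower (Rabs v) (- gamma)) /\
      (forall v, v <= - v0 -> psi1 v <= C * Rpower (Rabs v) (1 + gamma)) /\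
      asymp_equiv psi1 (fun v => c1 * Rpower (Rabs v) (- gamma)) p_infty /\
      asymp_equiv psi1 (fun v => c2 * Rpower (Rabs v) (1 + gamma)) m_infty /\
      (forall v, v0 <= v -> psi2 v <= C * Rpower (Rabs v) (gamma + 1)) /\
      (forall v, v <= - v0 -> psi2 v <= C * Rpower (Rabs v) (- gamma)) /\
      asymp_equiv psi2 (fun v => c2 * Rpower (Rabs v) (1 + gamma)) p_infty /\
      asymp_equiv psi2 (fun v => c1 * Rpower (Rabs v) (- gamma)) m_infty).
Proof.
  set (m := gamma + 1).
  assert (Hm : 1 < m) by (unfold m; lra).
  assert (Hg : gamma = m - 1) by (unfold m; ring).
  assert (Hw := w0_pos m Hm).
  set (k := / sqrt (w0 m)).
  assert (Hsq : 0 < sqrt (w0 m)) by (apply sqrt_lt_R0; lra).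
  assert (Hk : 0 < k) by (apply Rinv_0_lt_compat; lra).
  assert (Hkk : k * k * w0 m = 1).
  { unfold k. rewrite <- Rinv_mult. rewrite sqrt_sqrt by lra. field. lra. }
  set (p1 := fun v => k * phi m v).
  set (p2 := fun v => k * ps m v).
  assert (P1d : forall v, is_derive p1 v (k * dphi m v)) by (intros; apply D_scal; apply phi_derive; auto).
  assert (P1dd : forall v, is_derive (fun v => k * dphi m v) v (k * ddphi m v)) by (intros; apply D_scal; apply dphi_derive; auto).
  assert (P2d : forall v, is_derive p2 v (k * dps m v)) by (intros; apply D_scal; apply ps_derive; auto).
  assert (P2dd : forall v, is_derive (fun v => k * dps m v) v (k * ddps m v)) by (intros; apply D_scal; apply dps_derive; auto).
  assert (O1 : forall v, (1 + v*v) * (k * ddphi m v) = gamma * (gamma + 1) * p1 v).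
  { intros v. unfold p1. rewrite Hg. replace ((1 + v * v) * (k * ddphi m v)) with (k * ((1 + v * v) * ddphi m v)) by ring.
    rewrite phi_ode by auto. ring. }
  assert (O2 : forall v, (1 + v*v) * (k * ddps m v) = gamma * (gamma + 1) * p2 v).
  { intros v. unfold p2. rewrite Hg. replace ((1 + v * v) * (k * ddps m v)) with (k * ((1 + v * v) * ddps m v)) by ring.
    rewrite ps_ode by auto. ring. }
  destruct (sol_props gamma p1 _ _ P1d P1dd O1) as [S1 [Sm1 D1]].
  destruct (sol_props gamma p2 _ _ P2d P2dd O2) as [S2 [Sm2 D2]].
  assert (W12 : forall v, p1 v * (k * dps m v) - (k * dphi m v) * p2 v = 1).
  { intros v. unfold p1, p2.
    replace (k * phi m v * (k * dps m v) - k * dphi m v * (k * ps m v)) with (k*k*(phi m v * dps m v - dphi m v * ps m v)) by ring.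
    rewrite wr_phi_ps by auto. exact Hkk. }
  assert (Pos1 : forall v, 0 < p1 v) by (intros v; unfold p1; apply Rmult_lt_0_compat; auto; apply phi_pos; auto).
  assert (Pos2 : forall v, 0 < p2 v) by (intros v; unfold p2, ps; apply Rmult_lt_0_compat; auto; apply phi_pos; auto).
  exists p1, p2.
  split; [exact Sm1|]. split; [exact Sm2|].
  split; [exact Pos1|]. split; [exact Pos2|].
  split; [exact S1|]. split; [exact S2|].
  split. { intros v. unfold p1, p2, ps. reflexivity. }
  split.
  {
    intros a b H.
    assert (H0 : forall v, a * (k * dphi m v) + b * (k * dps m v) = 0).
    { intros v.
      assert (HD : is_derive (fun v => a * p1 v + b * p2 v) v (a * (k * dphi m v) + b * (k * dps m v))).
      { apply D_plus; apply D_scal; auto. }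
      apply is_derive_unique in HD. rewrite <- HD.
      rewrite (Derive_ext _ (fun _ => 0)) by (intros; apply H). apply Derive_const. }
    specialize (H 0). specialize (H0 0). specialize (W12 0).
    set (A := p1 0) in *. set (B := p2 0) in *. set (A' := k * dphi m 0) in *. set (B' := k * dps m 0) in *.
    assert (Ea : a * (A * B' - A' * B) = B' * (a * A + b * B) - B * (a * A' + b * B')) by ring.
    assert (Eb : b * (A * B' - A' * B) = A * (a * A' + b * B') - A' * (a * A + b * B)) by ring.
    rewrite W12, H, H0 in Ea. rewrite W12, H, H0 in Eb. split; lra. }
  split.
  {
    intros chi Hchi. destruct (extract gamma chi Hchi) as [E1 [E2 E3]].
    set (b := p1 0 * Derive chi 0 - (k * dphi m 0) * chi 0).
    assert (WC : forall v, p1 v * Derive chi v - (k * dphi m v) * chi v = b).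
    { intros v. apply (wr_const p1 (fun v => k * dphi m v) (fun v => k * ddphi m v) chi (Derive chi) (Derive (Derive chi)) (gamma * (gamma + 1))); auto. }
    set (z := fun v => chi v - b * p2 v).
    set (dz := fun v => Derive chi v - b * (k * dps m v)).
    assert (Hz : forall v, is_derive z v (dz v)).
    { intros v. unfold z, dz. apply (is_derive_ext (fun v => chi v + (-b) * p2 v)). { intros; simpl; ring. }
      eapply D_eq. apply D_plus. apply E1. apply D_scal. apply P2d. ring. }
    assert (Wz : forall v, p1 v * dz v - (k * dphi m v) * z v = 0).
    { intros v. unfold z, dz.
      replace (p1 v * (Derive chi v - b * (k * dps m v)) - k * dphi m v * (chi v - b * p2 v))
        with ((p1 v * Derive chi v - (k * dphi m v) * chi v) - b * (p1 v * (k * dps m v) - (k * dphi m v) * p2 v)) by ring.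
      rewrite WC, W12. ring. }
    set (q := fun v => z v / p1 v).
    assert (Hq : forall v, q v = q 0).
    { apply (const_of_deriv0 q (fun v => (dz v * p1 v - z v * (k * dphi m v)) / (p1 v * p1 v))).
      - intros v. unfold q. assert (Hp := Pos1 v).
        apply (is_derive_ext (fun v => z v * / p1 v)). { intros; reflexivity. }
        eapply D_eq. apply D_mult. apply Hz. apply (is_derive_inv p1). apply P1d. lra.
        simpl. field. lra.
      - intros v. assert (Hp := Pos1 v). specialize (Wz v).
        replace (dz v * p1 v - z v * (k * dphi m v)) with (p1 v * dz v - k * dphi m v * z v) by ring.
        rewrite Wz. unfold Rdiv. ring. }
    exists (q 0), b. intros v. specialize (Hq v). assert (Hp := Pos1 v).
    unfold q in Hq. 
    assert (z v = q 0 * p1 v) by (unfold q; rewrite <- Hq; field; lra).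
    unfold z in H. lra. }
  split.
  { intros v. unfold wronskian. rewrite D1, D2. apply W12. }
  assert (Hc1 := c1_pos m Hm). assert (Hc2 := c2_pos m Hm).
  set (C1 := k * c1 m). set (C2 := k * c2 m).
  assert (HC1 : 0 < C1) by (unfold C1; nra). assert (HC2 : 0 < C2) by (unfold C2; nra).
  assert (Tph : Tend (fun v => Rpower v (m-1) * phi m v / c1 m) 1).
  { assert (X : Tend (fun v => (fun x => x / c1 m) (Rpower v (m-1) * phi m v)) ((fun x => x / c1 m) (c1 m))).
    { apply (Tend_comp_cont (fun x => x / c1 m) (fun v => Rpower v (m-1) * phi m v) (c1 m)).
      apply continuity_pt_filterlim. apply continuity_pt_div.
      apply continuity_pt_id. apply continuity_pt_const. intros a b; reflexivity. lra.
      apply Tend_phi; auto. }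
    simpl in X. replace (c1 m / c1 m) with 1 in X by (field; lra). exact X. }
  assert (T1 : Tend (fun v => p1 v / (C1 * Rpower (Rabs v) (- gamma))) 1).
  { apply (Tend_ext _ _ _ 0) with (2 := Tph).
    intros v Hv. rewrite Rabs_pos_eq by lra. rewrite Rpower_Ropp, Hg. unfold p1, C1.
    assert (Hr := Rpower_pos v (m-1)). field. lra. }
  assert (Tps : Tend (fun v => ps m v / Rpower v m / c2 m) 1).
  { assert (X : Tend (fun v => (fun x => x / c2 m) (ps m v / Rpower v m)) ((fun x => x / c2 m) (c2 m))).
    { apply (Tend_comp_cont (fun x => x / c2 m) (fun v => ps m v / Rpower v m) (c2 m)).
      apply continuity_pt_filterlim. apply continuity_pt_div.
      apply continuity_pt_id. apply continuity_pt_const. intros a b; reflexivity. lra.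
      apply Tend_ps; auto. }
    simpl in X. replace (c2 m / c2 m) with 1 in X by (field; lra). exact X. }
  assert (T2 : Tend (fun v => p1 (- v) / (C2 * Rpower (Rabs (- v)) (1 + gamma))) 1).
  { apply (Tend_ext _ _ _ 0) with (2 := Tps).
    intros v Hv. rewrite Rabs_Ropp, Rabs_pos_eq by lra. replace (1 + gamma) with m by (unfold m; ring).
    unfold p1, C2, ps. assert (Hr := Rpower_pos v m). field. lra. }
  assert (T3 : Tend (fun v => p2 v / (C2 * Rpower (Rabs v) (1 + gamma))) 1).
  { apply (Tend_ext _ _ _ 0) with (2 := Tps).
    intros v Hv. rewrite Rabs_pos_eq by lra. replace (1 + gamma) with m by (unfold m; ring).
    unfold p2, C2. assert (Hr := Rpower_pos v m). field. lra. }
  assert (T4 : Tend (fun v => p2 (- v) / (C1 * Rpower (Rabs (- v)) (- gamma))) 1).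
  { apply (Tend_ext _ _ _ 0) with (2 := T1).
    intros v Hv. unfold p1, p2, ps. rewrite Ropp_involutive, Rabs_Ropp. reflexivity. }
  destruct (Tend_lt _ _ 2 T1 ltac:(lra)) as [M1 HM1].
  destruct (Tend_lt _ _ 2 T2 ltac:(lra)) as [M2 HM2].
  destruct (Tend_lt _ _ 2 T3 ltac:(lra)) as [M3 HM3].
  destruct (Tend_lt _ _ 2 T4 ltac:(lra)) as [M4 HM4].
  set (v0 := Rmax (Rmax (Rmax M1 M2) (Rmax M3 M4)) 0 + 1).
  assert (Hv0 : 0 < v0) by (unfold v0; generalize (Rmax_r (Rmax (Rmax M1 M2) (Rmax M3 M4)) 0); lra).
  assert (HM : M1 < v0 /\ M2 < v0 /\ M3 < v0 /\ M4 < v0).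
  { unfold v0. generalize (Rmax_l (Rmax (Rmax M1 M2) (Rmax M3 M4)) 0) (Rmax_l (Rmax M1 M2) (Rmax M3 M4))
      (Rmax_r (Rmax M1 M2) (Rmax M3 M4)) (Rmax_l M1 M2) (Rmax_r M1 M2) (Rmax_l M3 M4) (Rmax_r M3 M4). intros. lra. }
  destruct HM as [HM1' [HM2' [HM3' HM4']]].
  exists v0, (2 * (C1 + C2)), C1, C2.
  split; [exact Hv0|]. split; [lra|]. split; [exact HC1|]. split; [exact HC2|].
  split.
  { intros v Hv. assert (Hr := Rpower_pos (Rabs v) (- gamma)).
    assert (H := ratio_le2 p1 (fun v => C1 * Rpower (Rabs v) (- gamma)) (Rmax M1 0)).
    assert (Hle : p1 v <= 2 * (C1 * Rpower (Rabs v) (- gamma))).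
    { apply H. intros u Hu. apply HM1. eapply Rle_lt_trans; [apply Rmax_l| exact Hu].
      intros u Hu. apply Rmult_lt_0_compat. lra. apply Rpower_pos.
      generalize (Rmax_l M1 0) (Rmax_r M1 0). intros. apply Rmax_lub_lt; lra. }
    nra. }
  split.
  { intros v Hv. set (u := - v). assert (Hu : v0 <= u) by (unfold u; lra).
    replace v with (- u) by (unfold u; ring).
    assert (Hr := Rpower_pos (Rabs (- u)) (1 + gamma)).
    assert (Hle : p1 (- u) <= 2 * (C2 * Rpower (Rabs (- u)) (1 + gamma))).
    { apply (ratio_le2 (fun u => p1 (- u)) (fun u => C2 * Rpower (Rabs (- u)) (1 + gamma)) M2).
      exact HM2. intros; apply Rmult_lt_0_compat. lra. apply Rpower_pos. lra. }
    nra. }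
  split. { apply Tend_is_lim. exact T1. }
  split. { apply Tend_is_lim_m. exact T2. }
  split.
  { intros v Hv. assert (Hr := Rpower_pos (Rabs v) (1 + gamma)).
    assert (Hle : p2 v <= 2 * (C2 * Rpower (Rabs v) (1 + gamma))).
    { apply (ratio_le2 p2 (fun v => C2 * Rpower (Rabs v) (1 + gamma)) M3).
      exact HM3. intros; apply Rmult_lt_0_compat. lra. apply Rpower_pos. lra. }
    assert (0 < C1 * Rpower (Rabs v) (1 + gamma)) by (apply Rmult_lt_0_compat; auto).
    replace (1 + gamma) with m in * by (unfold m; ring). lra. }
  split.
  { intros v Hv. set (u := - v). assert (Hu : v0 <= u) by (unfold u; lra).
    replace v with (- u) by (unfold u; ring).
    assert (Hr := Rpower_pos (Rabs (- u)) (- gamma)).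
    assert (Hle : p2 (- u) <= 2 * (C1 * Rpower (Rabs (- u)) (- gamma))).
    { apply (ratio_le2 (fun u => p2 (- u)) (fun u => C1 * Rpower (Rabs (- u)) (- gamma)) M4).
      exact HM4. intros; apply Rmult_lt_0_compat. lra. apply Rpower_pos. lra. }
    nra. }
  split. { apply Tend_is_lim. exact T3. }
  { apply Tend_is_lim_m. exact T4. }
Qed.
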